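(* Let $\psi$ be a phylogenetic network on a set of three taxa $\{A,B,C\}$, with one gene copy ($a$, $b$, $c$ respectively) sampled from each taxon. For every choice of branch lengths $\lambda$ and inheritance probabilities $\Gamma$, there is no gene tree topology $g$ on $\{a,b,c\}$ that is anomalous for $(\psi,\lambda,\Gamma)$; that is, there is no $g$ with $P_{\psi,\lambda,\Gamma}(G=g) > P_{\psi,\lambda,\Gamma}(G=t)$ for all $t\in\mathcal{W}(\psi)$. In other words, $\psi$ does not produce anomalies.
   Context: A phylogenetic network $\psi$ is a rooted directed acyclic graph with a unique root (in-degree 0, out-degree 2), in which every other node is either an internal tree node (in-degree 1, out-degree 2), a leaf (in-degree 1, out-degree 0, labeled by a taxon), or a reticulation node (in-degree 2, out-degree 1). It has branch lengths $\lambda$ (in coalescent units), and for each reticulation node $v$ with incoming edges $b_1,b_2$ it has inheritance probabilities $\gamma_{b_1},\gamma_{b_2}\ge 0$ with $\gamma_{b_1}+\gamma_{b_2}=1$; $\Gamma$ denotes all of these. Multispecies network coalescent: gene lineages are traced backward in time from the leaves; within each branch, every pair of lineages present coalesces independently at rate 1 per coalescent unit (Kingman coalescent), for the duration given by the branch length; when a lineage reaches a reticulation node $v$, it independently enters incoming edge $b$ with probability $\gamma_b$; above the root all remaining lineages coalesce (root branch of infinite length). $P_{\psi,\lambda,\Gamma}(G=g)$ denotes the resulting probability that the gene tree topology is $g$ (with gene copies identified with their taxa). MUL-tree of $\psi$: processing nodes from the leaves toward the root, for each reticulation node $h$ with parents $u,v$ and child $w$, make two copies of the subtree rooted at $w$,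 attach one as a child of $u$ and the other as a child of $v$, and delete $h$ and its incident edges. The result is a tree whose leaves may share taxon labels. Parental trees: $\mathcal{W}(\psi)$ is the set of tree topologies on $\{A,B,C\}$ obtained from the MUL-tree by retaining exactly one leaf labeled by each taxon, deleting the others, and repeatedly suppressing nodes of in-degree 1 and out-degree 1. A gene tree topology $g$ is anomalous for $(\psi,\lambda,\Gamma)$ if $P_{\psi,\lambda,\Gamma}(G=g)>P_{\psi,\lambda,\Gamma}(G=t)$ for all $t\in\mathcal{W}(\psi)$; $\psi$ produces anomalies if some $\lambda,\Gamma$ admit an anomalous gene tree. *)

(* Defs.v *)
From Stdlib Require Import Reals List Bool Arith.
Import ListNotations.
Open Scope R_scope.

Inductive taxon : Type := TA | TB | TC.

Definition taxon_eqb (x y : taxon) : bool :=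
  match x, y with
  | TA, TA | TB, TB | TC, TC => true
  | _, _ => false
  end.

Definition all_taxa : list taxon := [TA; TB; TC].

(** Used both for gene
    lineages (gene copies a,b,c identified with taxa A,B,C) and for the
    MUL-tree / parental trees.  Child order is irrelevant: topologies are
    compared through [outgroup]. *)
Inductive tree : Type :=
| Lf : taxon -> tree
| Nd : tree -> tree -> tree.

(** A rooted tree topology on three leaves is determined by its outgroup
    (the leaf not in the cherry).  We identify topologies on {A,B,C}
    (resp. {a,b,c}) with the outgroup taxon. *)
Definition outgroup (t : tree) : option taxon :=
  match t with
  | Nd (Nd (Lf _) (Lf _)) (Lf z) => Some z
  | Nd (Lf z) (Nd (Lf _) (Lf _)) => Some z
  | _ => None
  end.

(** Node kinds; nodes are numbered [0 .. nn-1], and each node stores its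
    children (out-neighbours). *)
Inductive nkind : Type :=
| NRoot : nat -> nat -> nkind
| NTree : nat -> nat -> nkind
| NLeaf : taxon -> nkind
| NRet  : nat -> nkind.

Record network : Type := mkNet { nn : nat; kind : nat -> nkind }.

(** Edges are identified by (parent, slot); slot [false]/[true] = first /
    second child.  This allows several edges between the same pair of nodes. *)
Definition edge : Type := (nat * bool)%type.

Definition out_edges (psi : network) (u : nat) : list edge :=
  match kind psi u with
  | NRoot _ _ | NTree _ _ => [(u, false); (u, true)]
  | NRet _ => [(u, false)]
  | NLeaf _ => []
  end.

Definition child (psi : network) (e : edge) : nat :=
  match kind psi (fst e) with
  | NRoot c1 c2 | NTree c1 c2 => if snd e then c2 else c1
  | NRet c => c
  | NLeaf _ => 0%nat
  end.

Definition all_edges (psi : network) : list edge :=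
  flat_map (out_edges psi) (seq 0 (nn psi)).

Definition inc (psi : network) (v : nat) : list edge :=
  filter (fun e => Nat.eqb (child psi e) v) (all_edges psi).

Definition is_root (k : nkind) : bool :=
  match k with NRoot _ _ => true | _ => false end.
Definition is_ret (k : nkind) : bool :=
  match k with NRet _ => true | _ => false end.

Definition indeg_req (k : nkind) : nat :=
  match k with NRoot _ _ => 0 | NRet _ => 2 | _ => 1 end%nat.

(** Well-formed phylogenetic network on the taxa {A,B,C}:
    - acyclic (children have smaller index: a topological numbering, which
      every finite DAG admits);
    - in-degrees as prescribed by the node kinds (out-degrees are built in);
    - a unique root;
    - leaves bijectively labelled by the taxa A, B, C. *)
Definition wf_network (psi : network) : Prop :=
  (forall u, (u < nn psi)%nat ->
     forall e, In e (out_edges psi u) -> (child psi e < u)%nat) /\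
  (forall v, (v < nn psi)%nat -> length (inc psi v) = indeg_req (kind psi v)) /\
  (exists r, (r < nn psi)%nat /\ is_root (kind psi r) = true /\
     forall u, (u < nn psi)%nat -> is_root (kind psi u) = true -> u = r) /\
  (forall x : taxon, exists l, (l < nn psi)%nat /\ kind psi l = NLeaf x /\
     forall u, (u < nn psi)%nat -> kind psi u = NLeaf x -> u = l).

(** Branch lengths (coalescent units) and inheritance probabilities, both
    indexed by edges. *)
Definition valid_lengths (psi : network) (lam : nat -> bool -> R) : Prop :=
  forall e, In e (all_edges psi) -> 0 < lam (fst e) (snd e).

Definition valid_gammas (psi : network) (gam : nat -> bool -> R) : Prop :=
  forall v, (v < nn psi)%nat -> is_ret (kind psi v) = true ->
    (forall e, In e (inc psi v) -> 0 <= gam (fst e) (snd e)) /\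
    fold_right Rplus 0 (map (fun e => gam (fst e) (snd e)) (inc psi v)) = 1.

Definition dist (X : Type) : Type := list (R * X).
Definition dret {X : Type} (x : X) : dist X := [(1, x)].
Definition dbind {X Y : Type} (d : dist X) (f : X -> dist Y) : dist Y :=
  flat_map (fun px => map (fun qy => (fst px * fst qy, snd qy)) (f (snd px))) d.

(** Kingman coalescent (rate 1 per pair) along a branch of length t, acting
    on the list of lineages present at the bottom of the branch; the result
    is the list of lineages at the top.  A lineage is represented by the
    gene subtree it carries.  Since only three gene copies are sampled, at
    most three lineages ever occur in a branch; the transition probabilities
    are the exact Kingman ones:
      2 lineages: no coalescence e^{-t};
      3 lineages: none e^{-3t}; exactly one, a given pair: (e^{-t}-e^{-3t})/2;
                  two coalescences, a given first pair: g31(t)/3 with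
                  g31(t) = 1 - e^{-3t} - 3/2 (e^{-t} - e^{-3t}).
    (Lists of length > 3 never occur; they are left unchanged.) *)
Definition coal (t : R) (L : list tree) : dist (list tree) :=
  match L with
  | [x; y] => [(exp (- t), [x; y]); (1 - exp (- t), [Nd x y])]
  | [x; y; z] =>
      let h := (exp (- t) - exp (- (3 * t))) / 2 in
      let q := (1 - exp (- (3 * t)) - 3 * h) / 3 in
      [(exp (- (3 * t)), [x; y; z]);
       (h, [Nd x y; z]); (h, [Nd x z; y]); (h, [Nd y z; x]);
       (q, [Nd (Nd x y) z]); (q, [Nd (Nd x z) y]); (q, [Nd (Nd y z) x])]
  | _ => dret L
  end.

(** Coalescence above the root (branch of infinite length): all lineages
    coalesce, each pair equally likely to be first. *)
Definition coal_inf (L : list tree) : dist tree :=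
  match L with
  | [x] => dret x
  | [x; y] => dret (Nd x y)
  | [x; y; z] =>
      [(1/3, Nd (Nd x y) z); (1/3, Nd (Nd x z) y); (1/3, Nd (Nd y z) x)]
  | _ => []
  end.

(** state: lineages at the bottom of every edge, and the final gene tree *)
Definition state : Type := ((nat -> bool -> list tree) * option tree)%type.

Definition upd (b : nat -> bool -> list tree) (e : edge) (x : tree)
  : nat -> bool -> list tree :=
  fun u s => if Nat.eqb u (fst e) && Bool.eqb s (snd e)
             then x :: b u s else b u s.

(** each lineage independently enters incoming edge e with weight w(e) *)
Fixpoint distribute (ws : list (edge * R)) (L : list tree)
    (b : nat -> bool -> list tree) : dist (nat -> bool -> list tree) :=
  match L with
  | [] => dret b
  | x :: L' =>
      dbind (distribute ws L' b)
        (fun b' => map (fun ew => (snd ew, upd b' (fst ew) x)) ws)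
  end.

(** process node c (all its children have already been processed) *)
Definition step (psi : network) (lam gam : nat -> bool -> R) (c : nat)
    (st : state) : dist state :=
  let b := fst st in
  let f := snd st in
  let Ld : dist (list tree) :=
    match kind psi c with
    | NLeaf x => dret [Lf x]
    | NRet _ => coal (lam c false) (b c false)
    | NTree _ _ | NRoot _ _ =>
        dbind (coal (lam c false) (b c false)) (fun L1 =>
        dbind (coal (lam c true) (b c true)) (fun L2 => dret (L1 ++ L2)))
    end in
  let ws : list (edge * R) :=
    map (fun e => (e, if is_ret (kind psi c) then gam (fst e) (snd e) else 1))
        (inc psi c) in
  dbind Ld (fun L =>
    if is_root (kind psi c)
    then map (fun pt => (fst pt, (b, Some (snd pt)))) (coal_inf L)
    else map (fun pb => (fst pb, (snd pb, f))) (distribute ws L b)).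

(** nodes processed in increasing index order, i.e. from the leaves up *)
Definition msnc_run (psi : network) (lam gam : nat -> bool -> R) : dist state :=
  fold_left (fun d c => dbind d (step psi lam gam c)) (seq 0 (nn psi))
            (dret ((fun _ _ => []), None)).

(** P_{psi,lambda,Gamma}(G = g), g a gene tree topology given by its outgroup *)
Definition gene_tree_prob (psi : network) (lam gam : nat -> bool -> R)
    (g : taxon) : R :=
  fold_right Rplus 0
    (map (fun ps =>
            match snd (snd ps) with
            | Some t =>
                match outgroup t with
                | Some z => if taxon_eqb z g then fst ps else 0
                | None => 0
                end
            | None => 0
            end)
         (msnc_run psi lam gam)).

(** Unfolding from node u: copying the subtree below each reticulation to
    both of its parents and deleting the reticulation. *)
Fixpoint mul_from (psi : network) (fuel : nat) (u : nat) : tree :=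
  match fuel with
  | O => Lf TA
  | S f =>
      match kind psi u with
      | NLeaf x => Lf x
      | NRet c => mul_from psi f c
      | NTree c1 c2 | NRoot c1 c2 => Nd (mul_from psi f c1) (mul_from psi f c2)
      end
  end.

(** MUL-tree of psi with root r (fuel nn suffices by acyclicity) *)
Definition mul_tree (psi : network) (r : nat) : tree := mul_from psi (nn psi) r.

Fixpoint label_at (t : tree) (p : list bool) : option taxon :=
  match t, p with
  | Lf x, [] => Some x
  | Nd l _, false :: p' => label_at l p'
  | Nd _ r, true :: p' => label_at r p'
  | _, _ => None
  end.

Fixpoint restrict (keep : list bool -> bool) (t : tree) : option tree :=
  match t with
  | Lf x => if keep [] then Some (Lf x) else None
  | Nd l r =>
      match restrict (fun p => keep (false :: p)) l,
            restrict (fun p => keep (true :: p)) r with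
      | Some a, Some b => Some (Nd a b)
      | Some a, None => Some a
      | None, Some b => Some b
      | None, None => None
      end
  end.

Fixpoint lbeq (p q : list bool) : bool :=
  match p, q with
  | [], [] => true
  | a :: p', b :: q' => Bool.eqb a b && lbeq p' q'
  | _, _ => false
  end.

(** t (an outgroup) is the topology of a parental tree in W(psi): retain
    exactly one leaf of the MUL-tree labelled by each taxon (sel x is the
    position of the retained x-leaf). *)
Definition parental (psi : network) (t : taxon) : Prop :=
  exists r, (r < nn psi)%nat /\ is_root (kind psi r) = true /\
  exists sel : taxon -> list bool,
    (forall x, label_at (mul_tree psi r) (sel x) = Some x) /\
    exists tr,
      restrict (fun p => existsb (fun x => lbeq p (sel x)) all_taxa)
               (mul_tree psi r) = Some tr /\
      outgroup tr = Some t.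

Definition anomalous (psi : network) (lam gam : nat -> bool -> R) (g : taxon)
  : Prop :=
  forall t, parental psi t -> gene_tree_prob psi lam gam g > gene_tree_prob psi lam gam t.

(* Main.v *)
Require Import Defs.
From Stdlib Require Import Reals List Lra Lia Arith Bool FunctionalExtensionality Classical.
Import ListNotations.

Open Scope R_scope.

Definition E {X : Type} (d : Defs.dist X) (g : X -> R) : R :=
  fold_right Rplus 0 (map (fun px => fst px * g (snd px)) d).

Lemma E_app {X} (d1 d2 : Defs.dist X) g : E (d1 ++ d2) g = E d1 g + E d2 g.
Proof. unfold E; induction d1; simpl; [lra|rewrite IHd1; lra]. Qed.

Lemma E_scale {X} (c : R) (d : Defs.dist X) g :
  E (map (fun qy => (c * fst qy, snd qy)) d) g = c * E d g.
Proof. unfold E; induction d; simpl; [lra|]. rewrite IHd; simpl; lra. Qed.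

Lemma E_dbind {X Y} (d : Defs.dist X) (f : X -> Defs.dist Y) g :
  E (dbind d f) g = E d (fun x => E (f x) g).
Proof.
  unfold dbind; induction d as [|[p x] d IH]; simpl; [reflexivity|].
  rewrite E_app, E_scale, IH. unfold E at 3; simpl. reflexivity.
Qed.

Lemma E_dret {X} (x : X) g : E (dret x) g = g x.
Proof. unfold E, dret; simpl; lra. Qed.

Lemma E_map {X Y} (h : X -> Y) (d : Defs.dist X) g :
  E (map (fun pb => (fst pb, h (snd pb))) d) g = E d (fun x => g (h x)).
Proof. unfold E; induction d; simpl; [lra|rewrite IHd; lra]. Qed.

Lemma E_ext {X} (d : Defs.dist X) g g' :
  (forall px, In px d -> g (snd px) = g' (snd px)) -> E d g = E d g'.
Proof.
  unfold E; induction d; simpl; intros H; [lra|].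
  rewrite H by auto. rewrite IHd by auto. lra.
Qed.

Lemma E_le {X} (d : Defs.dist X) g g' :
  (forall px, In px d -> 0 <= fst px /\ g (snd px) <= g' (snd px)) -> E d g <= E d g'.
Proof.
  unfold E; induction d; simpl; intros H; [lra|].
  destruct (H a (or_introl eq_refl)) as [H1 H2].
  assert (fst a * g (snd a) <= fst a * g' (snd a)) by (apply Rmult_le_compat_l; auto).
  assert (fold_right Rplus 0 (map (fun px : R * X => fst px * g (snd px)) d) <=
          fold_right Rplus 0 (map (fun px : R * X => fst px * g' (snd px)) d)) by (apply IHd; auto).
  lra.
Qed.

Lemma E_plus {X} (d : Defs.dist X) g h : E d (fun x => g x + h x) = E d g + E d h.
Proof. unfold E; induction d; simpl; [lra|rewrite IHd; lra]. Qed.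

Lemma E_minus {X} (d : Defs.dist X) g h : E d (fun x => g x - h x) = E d g - E d h.
Proof. unfold E; induction d; simpl; [lra|rewrite IHd; lra]. Qed.

Lemma E_const {X} (d : Defs.dist X) g C :
  (forall px, In px d -> g (snd px) = C) -> E d g = C * E d (fun _ => 1).
Proof.
  unfold E; induction d; simpl; intros H; [lra|].
  rewrite H by auto. rewrite IHd by auto. lra.
Qed.

Lemma E_nonneg {X} (d : Defs.dist X) g :
  (forall px, In px d -> 0 <= fst px /\ 0 <= g (snd px)) -> 0 <= E d g.
Proof.
  intros H. replace 0 with (E d (fun _ => 0)).
  - apply E_le. intros px Hp; destruct (H px Hp); auto.
  - clear H. unfold E; induction d; simpl; [lra|]. rewrite IHd; lra.
Qed.

Lemma in_dbind {X Y} (d : Defs.dist X) (f : X -> Defs.dist Y) q :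
  In q (dbind d f) -> exists px qy, In px d /\ In qy (f (snd px)) /\
     q = (fst px * fst qy, snd qy).
Proof.
  unfold dbind. intros H. apply in_flat_map in H. destruct H as [px [H1 H2]].
  apply in_map_iff in H2. destruct H2 as [qy [H3 H4]]. exists px, qy; auto.
Qed.

Fixpoint occ (a : taxon) (T : tree) : nat :=
  match T with Lf b => if taxon_eqb a b then 1%nat else 0%nat
  | Nd l r => (occ a l + occ a r)%nat end.
Definition occl (a : taxon) (L : list tree) : nat :=
  fold_right (fun T n => (occ a T + n)%nat) 0%nat L.

Definition isp (a b c d : taxon) : bool :=
  (taxon_eqb a c && taxon_eqb b d) || (taxon_eqb a d && taxon_eqb b c).

Definition eps (x y z : taxon) (l r : tree) : R :=
  match l, r with
  | Lf a, Lf b => if isp a b y z then 1 else if isp a b x y then -1 else 0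
  | _, _ => 0 end.

Fixpoint ch (x y z : taxon) (T : tree) : R :=
  match T with Lf _ => 0 | Nd l r => ch x y z l + ch x y z r + eps x y z l r end.
Definition chl x y z (L : list tree) : R := fold_right (fun T s => ch x y z T + s) 0 L.

Lemma exp3 t : exp (- (3 * t)) = exp (- t) * exp (- t) * exp (- t).
Proof. rewrite <- !exp_plus. f_equal. lra. Qed.

Lemma exp_facts t : 0 <= t -> 0 < exp (- t) <= 1.
Proof.
  intros Ht. split. apply exp_pos.
  rewrite <- exp_0. destruct (Req_dec t 0). subst. rewrite Ropp_0. lra.
  left. apply exp_increasing. lra.
Qed.

Lemma coal_weights t L : 0 <= t -> forall px, In px (coal t L) -> 0 <= fst px.
Proof.
  intros Ht px H. destruct (exp_facts t Ht) as [u1 u2].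
  set (u := exp (- t)) in *.
  destruct L as [|x1 [|x2 [|x3 [|x4 L]]]]; simpl in H;
    repeat (destruct H as [H|H]; [subst px; simpl; rewrite ?exp3; fold u; try nra|]);
    try contradiction.
  all: replace ((1 - u * u * u - 3 * ((u - u * u * u) / 2)) / 3) with ((u-1)*(u-1)*(u+2)/6) by field;
       apply Rmult_le_pos; [|lra]; apply Rmult_le_pos; nra.
Qed.

Lemma coal_mass t L : E (coal t L) (fun _ => 1) = 1.
Proof.
  destruct L as [|x1 [|x2 [|x3 [|x4 L]]]]; unfold E; simpl; try lra.
Qed.

Lemma coal_inf_mass L : (1 <= length L <= 3)%nat -> E (coal_inf L) (fun _ => 1) = 1.
Proof.
  intros H. destruct L as [|x1 [|x2 [|x3 [|x4 L]]]]; simpl in H; try lia; unfold E; simpl; lra.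
Qed.

Lemma coal_inf_weights L px : In px (coal_inf L) -> 0 <= fst px.
Proof.
  destruct L as [|x1 [|x2 [|x3 [|x4 L]]]]; simpl; intros H;
  repeat (destruct H as [H|H]; [subst px; simpl; lra|]); contradiction.
Qed.

Lemma occl_app a L1 L2 : occl a (L1 ++ L2) = (occl a L1 + occl a L2)%nat.
Proof. induction L1; simpl; [auto|]. rewrite IHL1; lia. Qed.

Lemma coal_occ t L px : In px (coal t L) -> forall a, occl a (snd px) = occl a L.
Proof.
  destruct L as [|x1 [|x2 [|x3 [|x4 L]]]]; simpl; intros H a;
  repeat (destruct H as [H|H]; [subst px; simpl; lia|]); contradiction.
Qed.

Lemma coal_inf_occ L px : In px (coal_inf L) -> forall a, occ a (snd px) = occl a L.
Proof.
  destruct L as [|x1 [|x2 [|x3 [|x4 L]]]]; simpl; intros H a;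
  repeat (destruct H as [H|H]; [subst px; simpl; lia|]); contradiction.
Qed.

Lemma coal_ch x y z t L : 0 <= t ->
  (forall T1 T2, L = [T1; T2] -> 0 <= eps x y z T1 T2) ->
  (forall T1 T2 T3, L = [T1; T2; T3] ->
      eps x y z T1 T2 + eps x y z T1 T3 + eps x y z T2 T3 = 0) ->
  chl x y z L <= E (coal t L) (chl x y z).
Proof.
  intros Ht H2 H3. destruct (exp_facts t Ht) as [u1 u2].
  destruct L as [|x1 [|x2 [|x3 [|x4 L]]]]; unfold E; simpl; try lra.
  - specialize (H2 x1 x2 eq_refl). nra.
  - specialize (H3 x1 x2 x3 eq_refl). rewrite exp3. set (u := exp (-t)) in *.
    set (e12 := eps x y z x1 x2) in *. set (e13 := eps x y z x1 x3) in *.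
    set (e23 := eps x y z x2 x3) in *.
    assert (Hq : forall a b, eps x y z (Nd a b) x3 = 0 /\ eps x y z (Nd a b) x2 = 0 /\ eps x y z (Nd a b) x1 = 0)
      by (intros; simpl; auto).
    repeat match goal with |- context [eps x y z (Nd ?a ?b) ?c] =>
      let h := fresh in destruct (Hq a b) as [h [? ?]]; clear h end.
    simpl. unfold Rdiv. 
    replace (eps x y z (Nd x1 x2) x3) with 0 by reflexivity.
    replace (eps x y z (Nd x1 x3) x2) with 0 by reflexivity.
    replace (eps x y z (Nd x2 x3) x1) with 0 by reflexivity.
    nra.
Qed.

Lemma coal_inf_ch x y z L :
  (1 <= length L <= 3)%nat ->
  (forall T1 T2, L = [T1; T2] -> 0 <= eps x y z T1 T2) ->
  (forall T1 T2 T3, L = [T1; T2; T3] ->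
      eps x y z T1 T2 + eps x y z T1 T3 + eps x y z T2 T3 = 0) ->
  chl x y z L <= E (coal_inf L) (ch x y z).
Proof.
  intros Hl H2 H3.
  destruct L as [|x1 [|x2 [|x3 [|x4 L]]]]; simpl in Hl; try lia; unfold E; simpl; try lra.
  - specialize (H2 x1 x2 eq_refl). lra.
  - specialize (H3 x1 x2 x3 eq_refl).
    replace (eps x y z (Nd x1 x2) x3) with 0 by reflexivity.
    replace (eps x y z (Nd x1 x3) x2) with 0 by reflexivity.
    replace (eps x y z (Nd x2 x3) x1) with 0 by reflexivity.
    lra.
Qed.

Close Scope R_scope.

Lemma restrict_none keep T :
  (forall p, keep p = true -> label_at T p = None) -> restrict keep T = None.
Proof.
  revert keep; induction T as [a|l IHl r IHr]; intros keep H; simpl.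
  - destruct (keep []) eqn:E; auto. specialize (H [] E). simpl in H. discriminate.
  - rewrite IHl, IHr; auto.
    + intros p Hp. exact (H (true :: p) Hp).
    + intros p Hp. exact (H (false :: p) Hp).
Qed.

Lemma restrict_one keep T p0 w :
  keep p0 = true -> label_at T p0 = Some w ->
  (forall p, keep p = true -> label_at T p <> None -> p = p0) ->
  restrict keep T = Some (Lf w).
Proof.
  revert keep p0; induction T as [a|l IHl r IHr]; intros keep p0 K L H; simpl.
  - destruct p0; simpl in L; [|discriminate]. inversion L; subst. rewrite K; auto.
  - destruct p0 as [|[|] p0]; simpl in L; try discriminate.
    + rewrite (restrict_none (fun p => keep (false :: p)) l).
      * rewrite (IHr (fun p => keep (true :: p)) p0); auto.
        intros p Kp Lp. specialize (H (true :: p) Kp Lp). inversion H; auto.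
      * intros p Kp. destruct (label_at l p) eqn:E; auto.
        assert (label_at (Nd l r) (false :: p) <> None) by (simpl; rewrite E; discriminate).
        specialize (H _ Kp H0). discriminate.
    + rewrite (restrict_none (fun p => keep (true :: p)) r).
      * rewrite (IHl (fun p => keep (false :: p)) p0); auto.
        intros p Kp Lp. specialize (H (false :: p) Kp Lp). inversion H; auto.
      * intros p Kp. destruct (label_at r p) eqn:E; auto.
        assert (label_at (Nd l r) (true :: p) <> None) by (simpl; rewrite E; discriminate).
        specialize (H _ Kp H0). discriminate.
Qed.

Lemma restrict_two keep T p1 p2 w1 w2 :
  p1 <> p2 -> keep p1 = true -> keep p2 = true ->
  label_at T p1 = Some w1 -> label_at T p2 = Some w2 ->
  (forall p, keep p = true -> label_at T p <> None -> p = p1 \/ p = p2) ->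
  restrict keep T = Some (Nd (Lf w1) (Lf w2)) \/ restrict keep T = Some (Nd (Lf w2) (Lf w1)).
Proof.
  revert keep p1 p2; induction T as [a|l IHl r IHr]; intros keep p1 p2 D K1 K2 L1 L2 H; simpl.
  - destruct p1; simpl in L1; [|discriminate]. destruct p2; simpl in L2; [|discriminate]. congruence.
  - destruct p1 as [|[|] p1]; simpl in L1; try discriminate;
    destruct p2 as [|[|] p2]; simpl in L2; try discriminate.
    +
      rewrite (restrict_none (fun p => keep (false :: p)) l).
      * destruct (IHr (fun p => keep (true :: p)) p1 p2) as [E|E]; auto; try congruence.
        -- intros p Kp Lp. destruct (H (true :: p) Kp Lp) as [E|E]; inversion E; auto.
        -- rewrite E; auto.
        -- rewrite E; auto.
      * intros p Kp. destruct (label_at l p) eqn:E; auto.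
        assert (label_at (Nd l r) (false :: p) <> None) by (simpl; rewrite E; discriminate).
        destruct (H _ Kp H0) as [E'|E']; discriminate.
    +
      rewrite (restrict_one (fun p => keep (false :: p)) l p2 w2); auto.
      rewrite (restrict_one (fun p => keep (true :: p)) r p1 w1); auto.
      * intros p Kp Lp. destruct (H (true :: p) Kp Lp) as [E|E]; inversion E; auto.
      * intros p Kp Lp. destruct (H (false :: p) Kp Lp) as [E|E]; inversion E; auto.
    + rewrite (restrict_one (fun p => keep (false :: p)) l p1 w1); auto.
      rewrite (restrict_one (fun p => keep (true :: p)) r p2 w2); auto.
      * intros p Kp Lp. destruct (H (true :: p) Kp Lp) as [E|E]; inversion E; auto.
      * intros p Kp Lp. destruct (H (false :: p) Kp Lp) as [E|E]; inversion E; auto.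
    + rewrite (restrict_none (fun p => keep (true :: p)) r).
      * destruct (IHl (fun p => keep (false :: p)) p1 p2) as [E|E]; auto; try congruence.
        -- intros p Kp Lp. destruct (H (false :: p) Kp Lp) as [E|E]; inversion E; auto.
        -- rewrite E; auto.
        -- rewrite E; auto.
      * intros p Kp. destruct (label_at r p) eqn:E; auto.
        assert (label_at (Nd l r) (true :: p) <> None) by (simpl; rewrite E; discriminate).
        destruct (H _ Kp H0) as [E'|E']; discriminate.
Qed.

Definition prefix (Q P : list bool) : Prop := exists R, P = Q ++ R.

Lemma prefix_nil P : prefix [] P.
Proof. exists P; reflexivity. Qed.

Lemma prefix_diff Q b1 b2 P1 P2 : b1 <> b2 -> prefix Q (b1 :: P1) -> prefix Q (b2 :: P2) -> Q = [].
Proof.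
  intros D [R1 E1] [R2 E2]. destruct Q as [|c Q]; auto. simpl in *.
  inversion E1; inversion E2; subst. congruence.
Qed.

Lemma prefix_cons Q b P : prefix Q (b :: P) -> Q = [] \/ exists Q', Q = b :: Q' /\ prefix Q' P.
Proof.
  intros [R E]. destruct Q as [|c Q]; auto. right. simpl in E. inversion E; subst.
  exists Q; split; auto. exists R; auto.
Qed.

Ltac side H b := intros p Kp Lp; destruct (H (b :: p) Kp Lp) as [E|[E|E]]; inversion E; auto.

Lemma restrict_three keep T p1 p2 p3 w1 w2 w3 :
  p1 <> p2 -> p1 <> p3 -> p2 <> p3 -> keep p1 = true -> keep p2 = true -> keep p3 = true ->
  label_at T p1 = Some w1 -> label_at T p2 = Some w2 -> label_at T p3 = Some w3 ->
  (forall p, keep p = true -> label_at T p <> None -> p = p1 \/ p = p2 \/ p = p3) ->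
  exists tr, restrict keep T = Some tr /\ (exists o, outgroup tr = Some o) /\
    (forall Q, prefix Q p1 -> prefix Q p2 -> ~ prefix Q p3 -> outgroup tr = Some w3).
Proof.
  revert keep p1 p2 p3; induction T as [a|l IHl r IHr];
    intros keep p1 p2 p3 D12 D13 D23 K1 K2 K3 L1 L2 L3 H; simpl.
  - destruct p1; simpl in L1; [|discriminate]. destruct p2; simpl in L2; [|discriminate]. congruence.
  - destruct p1 as [|[|] p1]; simpl in L1; try discriminate;
    destruct p2 as [|[|] p2]; simpl in L2; try discriminate;
    destruct p3 as [|[|] p3]; simpl in L3; try discriminate.
    +
      rewrite (restrict_none (fun p => keep (false :: p)) l).
      * destruct (IHr (fun p => keep (true :: p)) p1 p2 p3) as [tr [E [Ho HQ]]]; auto; try congruence.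
        -- side H true.
        -- rewrite E. exists tr; split; auto; split; auto.
           intros Q Q1 Q2 Q3. apply prefix_cons in Q1. destruct Q1 as [->|[Q' [-> Q1]]].
           ++ exfalso; apply Q3, prefix_nil.
           ++ apply (HQ Q'); auto.
              apply prefix_cons in Q2. destruct Q2 as [Q2|[Q'' [E2 Q2]]]; [discriminate|]. inversion E2; subst; auto.
              intros [R3 E3]. apply Q3. exists R3. simpl. rewrite E3; auto.
      * intros p Kp. destruct (label_at l p) eqn:E; auto.
        assert (label_at (Nd l r) (false :: p) <> None) by (simpl; rewrite E; discriminate).
        destruct (H _ Kp H0) as [E'|[E'|E']]; discriminate.
    +
      rewrite (restrict_one (fun p => keep (false :: p)) l p3 w3); auto; [|side H false].
      destruct (restrict_two (fun p => keep (true :: p)) r p1 p2 w1 w2) as [E|E]; auto; try congruence;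
        try (side H true); (rewrite E; eexists; split; [reflexivity|split; [eexists; reflexivity|intros; reflexivity]]).
    +
      rewrite (restrict_one (fun p => keep (false :: p)) l p2 w2); auto; [|side H false].
      destruct (restrict_two (fun p => keep (true :: p)) r p1 p3 w1 w3) as [E|E]; auto; try congruence;
        try (side H true); (rewrite E; eexists; (split; [reflexivity|split; [eexists; reflexivity|]]);
        intros Q Q1 Q2 Q3; exfalso; apply Q3;
        rewrite (prefix_diff Q true false p1 p2) by (auto; discriminate); apply prefix_nil).
    +
      rewrite (restrict_one (fun p => keep (true :: p)) r p1 w1); auto; [|side H true].
      destruct (restrict_two (fun p => keep (false :: p)) l p2 p3 w2 w3) as [E|E]; auto; try congruence;
        try (side H false); (rewrite E; eexists; (split; [reflexivity|split; [eexists; reflexivity|]]);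
        intros Q Q1 Q2 Q3; exfalso; apply Q3;
        rewrite (prefix_diff Q true false p1 p2) by (auto; discriminate); apply prefix_nil).
    +
      rewrite (restrict_one (fun p => keep (false :: p)) l p1 w1); auto; [|side H false].
      destruct (restrict_two (fun p => keep (true :: p)) r p2 p3 w2 w3) as [E|E]; auto; try congruence;
        try (side H true); (rewrite E; eexists; (split; [reflexivity|split; [eexists; reflexivity|]]);
        intros Q Q1 Q2 Q3; exfalso; apply Q3;
        rewrite (prefix_diff Q false true p1 p2) by (auto; discriminate); apply prefix_nil).
    +
      rewrite (restrict_one (fun p => keep (true :: p)) r p2 w2); auto; [|side H true].
      destruct (restrict_two (fun p => keep (false :: p)) l p1 p3 w1 w3) as [E|E]; auto; try congruence;
        try (side H false); (rewrite E; eexists; (split; [reflexivity|split; [eexists; reflexivity|]]);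
        intros Q Q1 Q2 Q3; exfalso; apply Q3;
        rewrite (prefix_diff Q false true p1 p2) by (auto; discriminate); apply prefix_nil).
    +
      rewrite (restrict_one (fun p => keep (true :: p)) r p3 w3); auto; [|side H true].
      destruct (restrict_two (fun p => keep (false :: p)) l p1 p2 w1 w2) as [E|E]; auto; try congruence;
        try (side H false); (rewrite E; eexists; split; [reflexivity|split; [eexists; reflexivity|intros; reflexivity]]).
    +
      rewrite (restrict_none (fun p => keep (true :: p)) r).
      * destruct (IHl (fun p => keep (false :: p)) p1 p2 p3) as [tr [E [Ho HQ]]]; auto; try congruence.
        -- side H false.
        -- rewrite E. destruct tr; [exists (Lf t); split; auto|exists (Nd tr1 tr2); split; auto]; split; auto;
           intros Q Q1 Q2 Q3; apply prefix_cons in Q1; destruct Q1 as [->|[Q' [-> Q1]]];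
           try (exfalso; apply Q3, prefix_nil);
           apply (HQ Q'); auto;
           [ apply prefix_cons in Q2; destruct Q2 as [Q2|[Q'' [E2 Q2]]]; [discriminate|]; inversion E2; subst; auto
           | intros [R3 E3]; apply Q3; exists R3; simpl; rewrite E3; auto
           | apply prefix_cons in Q2; destruct Q2 as [Q2|[Q'' [E2 Q2]]]; [discriminate|]; inversion E2; subst; auto
           | intros [R3 E3]; apply Q3; exists R3; simpl; rewrite E3; auto].
      * intros p Kp. destruct (label_at r p) eqn:E; auto.
        assert (label_at (Nd l r) (true :: p) <> None) by (simpl; rewrite E; discriminate).
        destruct (H _ Kp H0) as [E'|[E'|E']]; discriminate.
Qed.

Definition acyc psi := forall u, u < nn psi -> forall e, In e (out_edges psi u) -> child psi e < u.

Lemma acyc_tree psi u c1 c2 : acyc psi -> u < nn psi ->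
  (kind psi u = NTree c1 c2 \/ kind psi u = NRoot c1 c2) -> c1 < u /\ c2 < u.
Proof.
  intros A Hu Hk. assert (O : out_edges psi u = [(u,false);(u,true)])
    by (unfold out_edges; destruct Hk as [Hk|Hk]; rewrite Hk; auto).
  pose proof (A u Hu (u,false)) as H1. pose proof (A u Hu (u,true)) as H2.
  rewrite O in H1, H2. unfold child in H1, H2; simpl in H1, H2.
  destruct Hk as [Hk|Hk]; rewrite Hk in H1, H2; split; [apply H1|apply H2|apply H1|apply H2]; simpl; auto.
Qed.

Lemma acyc_ret psi u c : acyc psi -> u < nn psi -> kind psi u = NRet c -> c < u.
Proof.
  intros A Hu Hk. pose proof (A u Hu (u,false)) as H1. unfold out_edges, child in H1; rewrite Hk in H1.
  simpl in H1. rewrite Hk in H1. apply H1; simpl; auto.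
Qed.

Definition M psi v := mul_from psi (S v) v.

Lemma mul_fuel psi : acyc psi -> forall v, v < nn psi -> forall f, v < f -> mul_from psi f v = M psi v.
Proof.
  intros A. induction v as [v IH] using lt_wf_ind. intros Hv f Hf.
  unfold M. destruct f as [|f]; [lia|]. simpl.
  assert (E1: forall c, c < v -> mul_from psi f c = mul_from psi v c)
    by (intros c Hc; rewrite (IH c Hc ltac:(lia) f ltac:(lia)), (IH c Hc ltac:(lia) v Hc); auto).
  destruct (kind psi v) eqn:Hk; auto.
  - destruct (acyc_tree psi v n n0 A Hv (or_intror Hk)). rewrite !E1; auto.
  - destruct (acyc_tree psi v n n0 A Hv (or_introl Hk)). rewrite !E1; auto.
  - pose proof (acyc_ret psi v n A Hv Hk). rewrite !E1; auto.
Qed.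

Lemma M_unfold psi v : acyc psi -> v < nn psi ->
  M psi v = match kind psi v with
            | NLeaf x => Lf x
            | NRet c => M psi c
            | NTree c1 c2 | NRoot c1 c2 => Nd (M psi c1) (M psi c2) end.
Proof.
  intros A Hv. unfold M at 1. simpl. destruct (kind psi v) eqn:Hk; auto.
  - destruct (acyc_tree psi v n n0 A Hv (or_intror Hk)). rewrite !mul_fuel; auto; lia.
  - destruct (acyc_tree psi v n n0 A Hv (or_introl Hk)). rewrite !mul_fuel; auto; lia.
  - pose proof (acyc_ret psi v n A Hv Hk). rewrite !mul_fuel; auto; lia.
Qed.

Inductive reach (psi : network) : nat -> list bool -> nat -> Prop :=
| r_nil (v : nat) : reach psi v [] v
| r_tree (v c1 c2 : nat) (b : bool) (p : list bool) (w : nat) : (kind psi v = NTree c1 c2 \/ kind psi v = NRoot c1 c2) ->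
    reach psi (if b then c2 else c1) p w -> reach psi v (b :: p) w
| r_ret (v c : nat) (p : list bool) (w : nat) : kind psi v = NRet c -> reach psi c p w -> reach psi v p w.

Lemma reach_le psi v p w : acyc psi -> reach psi v p w -> v < nn psi -> w <= v.
Proof.
  intros A H; induction H; intros Hv; auto.
  - destruct (acyc_tree psi v c1 c2 A Hv H). destruct b; specialize (IHreach ltac:(lia)); lia.
  - pose proof (acyc_ret psi v c A Hv H). specialize (IHreach ltac:(lia)); lia.
Qed.

Lemma reach_app psi v p u q w : reach psi v p u -> reach psi u q w -> reach psi v (p ++ q) w.
Proof.
  intros H1 H2; induction H1; simpl; auto.
  - eapply r_tree; eauto.
  - eapply r_ret; eauto.
Qed.

Lemma reach_label psi v p w : acyc psi -> reach psi v p w -> v < nn psi ->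
  forall q, label_at (M psi v) (p ++ q) = label_at (M psi w) q.
Proof.
  intros A H; induction H; intros Hv q; simpl; auto.
  - rewrite M_unfold by auto. destruct H as [Hk|Hk]; rewrite Hk;
    destruct (acyc_tree psi v c1 c2 A Hv (ltac:(rewrite Hk; auto))).
    all: destruct b; simpl; apply IHreach; lia.
  - rewrite M_unfold by auto. rewrite H. apply IHreach.
    pose proof (acyc_ret psi v c A Hv H); lia.
Qed.

Fixpoint path psi (f : nat) (v : nat) (p : list bool) : list nat :=
  match f with
  | 0 => [v]
  | S f' => v :: match kind psi v, p with
                 | NRet c, _ => path psi f' c p
                 | NTree c1 c2, b :: p' | NRoot c1 c2, b :: p' => path psi f' (if b then c2 else c1) p'
                 | _, _ => [] end
  end.

Lemma path_le psi f v p w : acyc psi -> v < nn psi -> In w (path psi f v p) -> w <= v.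
Proof.
  intros A. revert v p; induction f; intros v p Hv H; simpl in H.
  - destruct H as [H|[]]; lia.
  - destruct H as [H|H]; [lia|].
    destruct (kind psi v) eqn:Hk.
    + destruct p as [|b p]; [destruct H|].
      destruct (acyc_tree psi v n n0 A Hv (or_intror Hk)).
      destruct b; apply IHf in H; lia.
    + destruct p as [|b p]; [destruct H|].
      destruct (acyc_tree psi v n n0 A Hv (or_introl Hk)).
      destruct b; apply IHf in H; lia.
    + destruct H.
    + pose proof (acyc_ret psi v n A Hv Hk). apply IHf in H; lia.
Qed.

Lemma path_prefix psi f v P R w : In w (path psi f v P) -> In w (path psi f v (P ++ R)).
Proof.
  revert v P; induction f; intros v P H; simpl in *; auto.
  destruct H as [H|H]; auto. right.
  destruct (kind psi v); destruct P; simpl in *; try contradiction; auto;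
  apply (IHf _ _ H).
Qed.

Lemma reach_path psi v p w f : acyc psi -> reach psi v p w -> v < nn psi -> v < f ->
  In w (path psi f v p).
Proof.
  intros A H; revert f; induction H; intros f Hv Hf; destruct f as [|f]; try lia; simpl; auto.
  - right. destruct (acyc_tree psi v c1 c2 A Hv H).
    destruct H as [Hk|Hk]; rewrite Hk; apply IHreach; destruct b; lia.
  - right. pose proof (acyc_ret psi v c A Hv H). rewrite H. apply IHreach; lia.
Qed.

Lemma path_split psi v p u t w f : acyc psi -> reach psi v p u -> v < nn psi ->
  In w (path psi f v (p ++ t)) -> u <= w \/ exists f', In w (path psi f' u t).
Proof.
  intros A H; revert f; induction H; intros f Hv Hin; simpl in *; eauto.
  - destruct f as [|f]; simpl in Hin.
    + destruct Hin as [<-|[]]. left. eapply reach_le; eauto. eapply r_tree; eauto.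
    + destruct Hin as [<-|Hin]. left. eapply reach_le; eauto. eapply r_tree; eauto.
      destruct (acyc_tree psi v c1 c2 A Hv H).
      destruct H as [Hk|Hk]; rewrite Hk in Hin; eapply IHreach; eauto; destruct b; lia.
  - destruct f as [|f]; simpl in Hin.
    + destruct Hin as [<-|[]]. left. eapply reach_le; eauto. eapply r_ret; eauto.
    + destruct Hin as [<-|Hin]. left. eapply reach_le; eauto. eapply r_ret; eauto.
      pose proof (acyc_ret psi v c A Hv H). rewrite H in Hin. eapply IHreach; eauto; lia.
Qed.

Lemma wf_acyc psi : wf_network psi -> acyc psi.
Proof. intros [A _]. exact A. Qed.

Lemma in_all_edges psi e : In e (all_edges psi) <-> exists u, u < nn psi /\ In e (out_edges psi u).
Proof.
  unfold all_edges. rewrite in_flat_map. split; intros [u [H1 H2]]; exists u; split; auto.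
  - apply in_seq in H1; lia.
  - apply in_seq; lia.
Qed.

Lemma out_fst psi u e : In e (out_edges psi u) -> fst e = u.
Proof.
  unfold out_edges; destruct (kind psi u); simpl; intros H;
  repeat (destruct H as [H|H]; [subst; auto|]); contradiction.
Qed.

Definition epos psi (e : edge) : list bool :=
  match kind psi (fst e) with NRet _ => [] | _ => [snd e] end.

Lemma edge_reach psi u e : In e (out_edges psi u) -> reach psi u (epos psi e) (child psi e).
Proof.
  intros H. pose proof (out_fst psi u e H) as F. unfold epos, child. rewrite F.
  unfold out_edges in H. destruct (kind psi u) eqn:Hk; simpl in H;
  repeat (destruct H as [H|H]; [subst e; simpl|]); try contradiction.
  - eapply r_tree with (b := false); [right; eauto|]. apply r_nil.
  - eapply r_tree with (b := true); [right; eauto|]. apply r_nil.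
  - eapply r_tree with (b := false); [left; eauto|]. apply r_nil.
  - eapply r_tree with (b := true); [left; eauto|]. apply r_nil.
  - eapply r_ret; eauto. apply r_nil.
Qed.

Lemma inc_spec psi v e : In e (inc psi v) <-> In e (all_edges psi) /\ child psi e = v.
Proof.
  unfold inc. rewrite filter_In. rewrite Nat.eqb_eq. tauto.
Qed.

Lemma nonroot_parent psi v : wf_network psi -> v < nn psi -> is_root (kind psi v) = false ->
  exists e, In e (inc psi v).
Proof.
  intros [_ [D _]] Hv Hr. specialize (D v Hv).
  destruct (inc psi v) as [|e l] eqn:E.
  - simpl in D. destruct (kind psi v); simpl in *; discriminate.
  - exists e; simpl; auto.
Qed.

Lemma root_reach psi r : wf_network psi -> r < nn psi -> is_root (kind psi r) = true ->
  (forall u, u < nn psi -> is_root (kind psi u) = true -> u = r) ->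
  forall v, v < nn psi -> exists p, reach psi r p v.
Proof.
  intros W Hr Hroot Uniq.
  assert (forall k v, v < nn psi -> nn psi - v <= k -> exists p, reach psi r p v).
  { induction k; intros v Hv Hk; [lia|].
    destruct (is_root (kind psi v)) eqn:Rv.
    - rewrite (Uniq v Hv Rv). exists []; apply r_nil.
    - destruct (nonroot_parent psi v W Hv Rv) as [e He].
      apply inc_spec in He. destruct He as [He Hc]. apply in_all_edges in He.
      destruct He as [u [Hu Hu2]].
      pose proof (wf_acyc psi W u Hu e Hu2) as Lt. rewrite Hc in Lt.
      destruct (IHk u Hu ltac:(lia)) as [p Hp].
      exists (p ++ epos psi e). eapply reach_app; eauto. rewrite <- Hc. apply edge_reach; auto. }
  intros v Hv. apply (H (nn psi) v Hv). lia.
Qed.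

Lemma root_last psi r : wf_network psi -> r < nn psi -> is_root (kind psi r) = true ->
  (forall u, u < nn psi -> is_root (kind psi u) = true -> u = r) -> r = nn psi - 1.
Proof.
  intros W Hr Hroot Uniq.
  destruct (Nat.eq_dec r (nn psi - 1)) as [E|NE]; auto. exfalso.
  set (v := nn psi - 1).
  assert (Hv : v < nn psi) by (unfold v; lia).
  destruct (is_root (kind psi v)) eqn:Rv.
  - apply NE. symmetry. apply Uniq; auto.
  - destruct (nonroot_parent psi v W Hv Rv) as [e He].
    apply inc_spec in He. destruct He as [He Hc]. apply in_all_edges in He.
    destruct He as [u [Hu Hu2]].
    pose proof (wf_acyc psi W u Hu e Hu2) as Lt. rewrite Hc in Lt. unfold v in Lt. lia.
Qed.

Lemma lbeq_eq p q : lbeq p q = true -> p = q.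
Proof.
  revert q; induction p as [|a p IH]; destruct q as [|b q]; simpl; intros H; try discriminate; auto.
  apply andb_prop in H. destruct H as [H1 H2]. apply Bool.eqb_prop in H1. subst. f_equal; auto.
Qed.

Lemma lbeq_refl p : lbeq p p = true.
Proof. induction p; simpl; auto. rewrite IHp, Bool.eqb_reflx; auto. Qed.

Lemma mul_tree_M psi r : acyc psi -> r < nn psi -> mul_tree psi r = M psi r.
Proof. intros A Hr. unfold mul_tree. apply mul_fuel; auto. Qed.

Lemma leaf_label psi r p l a : acyc psi -> r < nn psi -> reach psi r p l -> kind psi l = NLeaf a ->
  l < nn psi -> label_at (mul_tree psi r) p = Some a.
Proof.
  intros A Hr H Hk Hl. rewrite mul_tree_M by auto.
  rewrite <- (app_nil_r p). rewrite (reach_label psi r p l A H Hr []).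
  rewrite M_unfold by auto. rewrite Hk. reflexivity.
Qed.

Lemma taxon_cases a : a = TA \/ a = TB \/ a = TC.
Proof. destruct a; auto. Qed.

Lemma parental_of_sel psi r (sel : taxon -> list bool) :
  acyc psi -> r < nn psi -> is_root (kind psi r) = true ->
  (forall x, label_at (mul_tree psi r) (sel x) = Some x) ->
  forall x y z, x <> y -> x <> z -> y <> z ->
  exists tr, restrict (fun p => existsb (fun x => lbeq p (sel x)) all_taxa) (mul_tree psi r) = Some tr /\
    (exists o, outgroup tr = Some o) /\
    (forall Q, prefix Q (sel x) -> prefix Q (sel y) -> ~ prefix Q (sel z) -> outgroup tr = Some z).
Proof.
  intros A Hr Hroot HL x y z Dxy Dxz Dyz.
  assert (Dsel : forall a b, a <> b -> sel a <> sel b).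
  { intros a b D E. pose proof (HL a). pose proof (HL b). rewrite E in *. congruence. }
  apply restrict_three with (w1 := x) (w2 := y) (w3 := z); auto.
  - apply existsb_exists. exists x; split; [destruct x; simpl; auto|apply lbeq_refl].
  - apply existsb_exists. exists y; split; [destruct y; simpl; auto|apply lbeq_refl].
  - apply existsb_exists. exists z; split; [destruct z; simpl; auto|apply lbeq_refl].
  - intros p Kp _. apply existsb_exists in Kp. destruct Kp as [a [_ Ha]]. apply lbeq_eq in Ha. subst p.
    destruct x, y, z; try congruence; destruct a; auto.
Qed.

Lemma parental_exists psi : wf_network psi -> exists t, parental psi t.
Proof.
  intros W. pose proof (wf_acyc psi W) as A.
  destruct W as [A0 [D [[r [Hr [Hroot Uniq]]] Lv]]].
  assert (W : wf_network psi) by (repeat split; eauto).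
  assert (Hsel : forall a, exists p, label_at (mul_tree psi r) p = Some a).
  { intros a. destruct (Lv a) as [l [Hl [Hk _]]].
    destruct (root_reach psi r W Hr Hroot Uniq l Hl) as [p Hp].
    exists p. eapply leaf_label; eauto. }
  destruct (Hsel TA) as [pa Ha], (Hsel TB) as [pb Hb], (Hsel TC) as [pc Hc].
  set (sel := fun a => match a with TA => pa | TB => pb | TC => pc end).
  destruct (parental_of_sel psi r sel A Hr Hroot ltac:(intros [| |]; auto) TA TB TC)
    as [tr [E [[o Ho] _]]]; try discriminate.
  exists o. unfold parental. exists r; split; auto; split; auto.
  exists sel; split; [intros [| |]; auto|]. exists tr; auto.
Qed.

Lemma taxon_eqb_spec a b : taxon_eqb a b = true <-> a = b.
Proof. destruct a, b; simpl; split; intros; congruence. Qed.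

Lemma path_edge psi u e w f q : In e (out_edges psi u) -> In w (path psi f u (epos psi e ++ q)) ->
  w = u \/ exists f', In w (path psi f' (child psi e) q).
Proof.
  intros He Hin. pose proof (out_fst psi u e He) as F.
  destruct f as [|f]; simpl in Hin; [destruct Hin as [<-|[]]; auto|].
  destruct Hin as [<-|Hin]; [auto|right; exists f].
  unfold epos, child in *. rewrite F in *.
  unfold out_edges in He. destruct (kind psi u) eqn:Hk; simpl in He;
  repeat (destruct He as [He|He]; [subst e; simpl in *; auto|]); try contradiction.
Qed.

Lemma struct_parental psi x y z c e qx qy lx ly :
  wf_network psi -> x <> y -> x <> z -> y <> z ->
  c < nn psi -> In e (out_edges psi c) ->
  reach psi (child psi e) qx lx -> kind psi lx = NLeaf x -> lx < nn psi ->
  reach psi (child psi e) qy ly -> kind psi ly = NLeaf y -> ly < nn psi ->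
  ((exists u2 e2 q2 lz, c <= u2 < nn psi /\ In e2 (out_edges psi u2) /\ e2 <> e /\
      child psi e2 < c /\ reach psi (child psi e2) q2 lz /\ kind psi lz = NLeaf z /\ lz < nn psi)
   \/ (exists lz, c < lz < nn psi /\ kind psi lz = NLeaf z)) ->
  parental psi z.
Proof.
  intros W Dxy Dxz Dyz Hc He Rx Kx Lx Ry Ky Ly Hz.
  pose proof (wf_acyc psi W) as A.
  pose proof W as W'. destruct W' as [_ [_ [[r [Hr [Hroot Uniq]]] _]]].
  destruct (root_reach psi r W Hr Hroot Uniq c Hc) as [P0 HP0].
  set (Q := P0 ++ epos psi e).
  assert (HQ : reach psi r Q (child psi e)) by (apply reach_app with c; auto; apply edge_reach; auto).
  assert (HPc : In c (path psi (nn psi) r P0)) by (apply reach_path; auto).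
  assert (Zpos : exists pz lz, reach psi r pz lz /\ kind psi lz = NLeaf z /\ lz < nn psi /\ ~ prefix Q pz).
  { destruct Hz as [[u2 [e2 [q2 [lz [Hu2 [He2 [Dee [Hch [Rz [Kz Lz]]]]]]]]]]|[lz [Hlz Kz]]].
    - destruct (Nat.eq_dec u2 c) as [->|Nu].
      + exists (P0 ++ epos psi e2 ++ q2), lz. split; [|split; auto; split; auto].
        * apply reach_app with c; auto. apply reach_app with (child psi e2); auto. apply edge_reach; auto.
        * intros [R ER]. unfold Q in ER. rewrite <- app_assoc in ER. apply app_inv_head in ER.
          pose proof (out_fst psi c e He) as F1. pose proof (out_fst psi c e2 He2) as F2.
          unfold epos in ER. rewrite F1, F2 in ER.
          unfold out_edges in He, He2. destruct (kind psi c);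
            simpl in He, He2; try contradiction;
            repeat (destruct He as [He|He]; [subst e|]); try contradiction;
            repeat (destruct He2 as [He2|He2]; [subst e2|]); try contradiction;
            simpl in ER; inversion ER; congruence.
      + destruct (root_reach psi r W Hr Hroot Uniq u2 ltac:(lia)) as [P2 HP2].
        exists (P2 ++ epos psi e2 ++ q2), lz. split; [|split; auto; split; auto].
        * apply reach_app with u2; auto. apply reach_app with (child psi e2); auto. apply edge_reach; auto.
        * intros [R ER]. unfold Q in ER. rewrite <- app_assoc in ER.
          assert (Hin : In c (path psi (nn psi) r (P2 ++ epos psi e2 ++ q2)))
            by (rewrite ER; apply path_prefix; auto).
          destruct (path_split psi r P2 u2 _ c _ A HP2 Hr Hin) as [Le|[f' Hin']]; [lia|].
          destruct (path_edge psi u2 e2 c f' q2 He2 Hin') as [Ec|[f'' Hin'']]; [lia|].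
          apply path_le in Hin''; auto; lia.
    - destruct (root_reach psi r W Hr Hroot Uniq lz ltac:(lia)) as [P2 HP2].
      exists P2, lz. split; auto; split; auto; split; [lia|].
      intros [R ER]. unfold Q in ER. rewrite <- app_assoc in ER.
      assert (Hin : In c (path psi (nn psi) r (P2 ++ [])))
        by (rewrite app_nil_r, ER; apply path_prefix; auto).
      destruct (path_split psi r P2 lz [] c _ A HP2 Hr Hin) as [Le|[f' Hin']]; [lia|].
      destruct f'; simpl in Hin'; [destruct Hin' as [|[]]; lia|].
      rewrite Kz in Hin'. destruct Hin' as [|[]]; lia. }
  destruct Zpos as [pz [lz [Rz [Kz [Lz NP]]]]].
  set (sel := fun a => if taxon_eqb a x then Q ++ qx else if taxon_eqb a y then Q ++ qy else pz).
  assert (Sx : sel x = Q ++ qx) by (unfold sel; rewrite (proj2 (taxon_eqb_spec x x) eq_refl); auto).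
  assert (Sy : sel y = Q ++ qy).
  { unfold sel. destruct (taxon_eqb y x) eqn:E; [apply taxon_eqb_spec in E; congruence|].
    rewrite (proj2 (taxon_eqb_spec y y) eq_refl); auto. }
  assert (Sz : sel z = pz).
  { unfold sel. destruct (taxon_eqb z x) eqn:E; [apply taxon_eqb_spec in E; congruence|].
    destruct (taxon_eqb z y) eqn:E'; [apply taxon_eqb_spec in E'; congruence|]. auto. }
  assert (HL : forall a, label_at (mul_tree psi r) (sel a) = Some a).
  { intros a. destruct (taxon_eqb a x) eqn:Ex; [apply taxon_eqb_spec in Ex; subst a; rewrite Sx|].
    - eapply leaf_label; eauto. eapply reach_app; eauto.
    - destruct (taxon_eqb a y) eqn:Ey; [apply taxon_eqb_spec in Ey; subst a; rewrite Sy|].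
      + eapply leaf_label; eauto. eapply reach_app; eauto.
      + assert (a = z) by (destruct a, x, y, z; simpl in *; congruence). subst a. rewrite Sz.
        eapply leaf_label; eauto. }
  destruct (parental_of_sel psi r sel A Hr Hroot HL x y z Dxy Dxz Dyz) as [tr [E [_ Ho]]].
  exists r; split; auto; split; auto. exists sel; split; auto. exists tr; split; auto.
  apply (Ho Q).
  - rewrite Sx. exists qx; auto.
  - rewrite Sy. exists qy; auto.
  - rewrite Sz. auto.
Qed.

Open Scope R_scope.

Definition sumR (l : list R) : R := fold_right Rplus 0 l.
Definition sumN (l : list nat) : nat := fold_right plus 0%nat l.

Lemma sumR_app l1 l2 : sumR (l1 ++ l2) = sumR l1 + sumR l2.
Proof. induction l1; simpl; [lra|]. unfold sumR in *; simpl; rewrite IHl1; lra. Qed.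
Lemma sumN_app l1 l2 : sumN (l1 ++ l2) = (sumN l1 + sumN l2)%nat.
Proof. induction l1; simpl; [lia|]. unfold sumN in *; simpl; rewrite IHl1; lia. Qed.

Definition bget (b : nat -> bool -> list tree) (e : edge) := b (fst e) (snd e).

Definition edge_eq_dec : forall e1 e2 : edge, {e1 = e2} + {e1 <> e2}.
Proof. decide equality; [apply Bool.bool_dec | apply Nat.eq_dec]. Defined.

Lemma bget_upd_eq b e T : bget (upd b e T) e = T :: bget b e.
Proof. unfold bget, upd. rewrite Nat.eqb_refl, Bool.eqb_reflx. auto. Qed.

Lemma bget_upd_neq b e0 e T : e <> e0 -> bget (upd b e0 T) e = bget b e.
Proof.
  intros D. unfold bget, upd. destruct (Nat.eqb (fst e) (fst e0)) eqn:E1; simpl; auto.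
  destruct (Bool.eqb (snd e) (snd e0)) eqn:E2; auto.
  apply Nat.eqb_eq in E1. apply Bool.eqb_prop in E2. destruct e, e0; simpl in *; subst; congruence.
Qed.

Lemma sumR_upd (g : list tree -> R) (hh : tree -> R) (Hg : forall T L, g (T :: L) = hh T + g L)
  b e0 T Es : NoDup Es ->
  sumR (map (fun e => g (bget (upd b e0 T) e)) Es) =
  sumR (map (fun e => g (bget b e)) Es) + (if in_dec edge_eq_dec e0 Es then hh T else 0).
Proof.
  induction Es as [|e Es IH]; intros ND; simpl; [lra|].
  inversion ND; subst. unfold sumR in *; simpl. rewrite IH by auto.
  destruct (edge_eq_dec e e0) as [<-|D].
  - rewrite bget_upd_eq, Hg. destruct (edge_eq_dec e e); [|congruence].
    destruct (in_dec edge_eq_dec e Es); [contradiction|]. simpl; lra.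
  - rewrite bget_upd_neq by auto. destruct (in_dec edge_eq_dec e0 Es);
    destruct (edge_eq_dec e e0); try congruence; simpl; lra.
Qed.

Lemma sumN_upd (g : list tree -> nat) (hh : tree -> nat) (Hg : forall T L, g (T :: L) = (hh T + g L)%nat)
  b e0 T Es : NoDup Es ->
  sumN (map (fun e => g (bget (upd b e0 T) e)) Es) =
  (sumN (map (fun e => g (bget b e)) Es) + (if in_dec edge_eq_dec e0 Es then hh T else 0))%nat.
Proof.
  induction Es as [|e Es IH]; intros ND; simpl; [lia|].
  inversion ND; subst. unfold sumN in *; simpl. rewrite IH by auto.
  destruct (edge_eq_dec e e0) as [<-|D].
  - rewrite bget_upd_eq, Hg. destruct (edge_eq_dec e e); [|congruence].
    destruct (in_dec edge_eq_dec e Es); [contradiction|]. simpl; lia.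
  - rewrite bget_upd_neq by auto. destruct (in_dec edge_eq_dec e0 Es);
    destruct (edge_eq_dec e e0); try congruence; simpl; lia.
Qed.

Lemma dist_mass ws : (forall ew, In ew ws -> 0 <= snd ew) -> sumR (map snd ws) = 1 ->
  forall L b, E (distribute ws L b) (fun _ => 1) = 1 /\
              (forall px, In px (distribute ws L b) -> 0 <= fst px).
Proof.
  intros Hw Hs. induction L as [|T L IH]; intros b; simpl.
  - split; [unfold E, dret; simpl; lra|]. intros px [<-|[]]; simpl; lra.
  - destruct (IH b) as [IH1 IH2]. split.
    + rewrite E_dbind. transitivity (E (distribute ws L b) (fun _ => 1)); [|exact IH1]. apply E_ext. intros px _.
      clear - Hs. unfold E. rewrite map_map. simpl. transitivity (sumR (map snd ws)); [|exact Hs]. unfold sumR. f_equal.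
      apply map_ext. intros; lra.
    + intros px Hp. apply in_dbind in Hp. destruct Hp as [p0 [q [H1 [H2 ->]]]].
      apply in_map_iff in H2. destruct H2 as [ew [<- H3]]. simpl.
      apply Rmult_le_pos; auto.
Qed.

Lemma dist_pt_R (G : (nat -> bool -> list tree) -> R) (hh : tree -> R) ws :
  (forall b' ew T, In ew ws -> G (upd b' (fst ew) T) = G b' + hh T) ->
  forall L b px, In px (distribute ws L b) -> G (snd px) = G b + sumR (map hh L).
Proof.
  intros HG. induction L as [|T L IH]; intros b px Hp; simpl in *.
  - destruct Hp as [<-|[]]; simpl; unfold sumR; simpl; lra.
  - apply in_dbind in Hp. destruct Hp as [p0 [q [H1 [H2 ->]]]].
    apply in_map_iff in H2. destruct H2 as [ew [<- H3]]. simpl.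
    rewrite HG by auto. rewrite (IH b p0 H1). unfold sumR; simpl; lra.
Qed.

Lemma dist_pt_N (G : (nat -> bool -> list tree) -> nat) (hh : tree -> nat) ws :
  (forall b' ew T, In ew ws -> G (upd b' (fst ew) T) = (G b' + hh T)%nat) ->
  forall L b px, In px (distribute ws L b) -> G (snd px) = (G b + sumN (map hh L))%nat.
Proof.
  intros HG. induction L as [|T L IH]; intros b px Hp; simpl in *.
  - destruct Hp as [<-|[]]; simpl; unfold sumN; simpl; lia.
  - apply in_dbind in Hp. destruct Hp as [p0 [q [H1 [H2 ->]]]].
    apply in_map_iff in H2. destruct H2 as [ew [<- H3]]. simpl.
    rewrite HG by auto. rewrite (IH b p0 H1). unfold sumN; simpl; lia.
Qed.

Lemma occl_cons a T L : occl a (T :: L) = (occ a T + occl a L)%nat.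
Proof. reflexivity. Qed.

Lemma dist_I2 ws L b px : In px (distribute ws L b) -> forall e a,
  (0 < occl a (bget (snd px) e))%nat ->
  (0 < occl a (bget b e))%nat \/ ((0 < occl a L)%nat /\ In e (map fst ws)).
Proof.
  revert b px. induction L as [|T L IH]; intros b px Hp e a Ho; simpl in *.
  - destruct Hp as [<-|[]]; simpl in *; auto.
  - apply in_dbind in Hp. destruct Hp as [p0 [q [H1 [H2 ->]]]].
    apply in_map_iff in H2. destruct H2 as [ew [<- H3]]. simpl in Ho.
    destruct (edge_eq_dec e (fst ew)) as [->|D].
    + rewrite bget_upd_eq in Ho. unfold occl in *; simpl in *.
      destruct (occ a T) eqn:Eo.
      * simpl in Ho. destruct (IH b p0 H1 _ a Ho) as [?|[? ?]]; [left; auto|right; split; [lia|auto]].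
      * right; split; [lia|]. apply in_map; auto.
    + rewrite bget_upd_neq in Ho by auto.
      destruct (IH b p0 H1 _ a Ho) as [?|[? ?]]; [left; auto|].
      right; split; [unfold occl in *; simpl in *; lia|auto].
Qed.

(* unprocessed edges *)
Definition UE psi k := flat_map (out_edges psi) (seq k (nn psi - k)).

Lemma UE_cons psi k : (k < nn psi)%nat -> UE psi k = out_edges psi k ++ UE psi (S k).
Proof.
  intros H. unfold UE. replace (nn psi - k)%nat with (S (nn psi - S k)) by lia. simpl. auto.
Qed.

Lemma UE_nn psi : UE psi (nn psi) = [].
Proof. unfold UE. rewrite Nat.sub_diag. auto. Qed.

Lemma UE_in psi k e : In e (UE psi k) <-> exists u, (k <= u < nn psi)%nat /\ In e (out_edges psi u).
Proof.
  unfold UE. rewrite in_flat_map. split; intros [u [H1 H2]]; exists u; split; auto.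
  - apply in_seq in H1; lia.
  - apply in_seq; lia.
Qed.

Lemma out_nodup psi u : NoDup (out_edges psi u).
Proof.
  unfold out_edges; destruct (kind psi u); repeat constructor; simpl; intuition; try discriminate.
Qed.

Lemma flat_out_nodup psi l : NoDup l -> NoDup (flat_map (out_edges psi) l).
Proof.
  induction l as [|u l IH]; intros ND; simpl; [constructor|].
  inversion ND; subst. apply NoDup_app; auto. apply out_nodup.
  intros e He1 He2. apply in_flat_map in He2. destruct He2 as [u' [H3 H4]].
  apply out_fst in He1. apply out_fst in H4. subst. contradiction.
Qed.

Lemma UE_nodup psi k : NoDup (UE psi k).
Proof. apply flat_out_nodup, seq_NoDup. Qed.

Lemma filter_one {A} (P : A -> bool) (s : list A) l :
  NoDup s -> In l s -> P l = true -> (forall u, In u s -> P u = true -> u = l) ->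
  length (filter P s) = 1%nat.
Proof.
  induction s as [|u s IH]; intros ND Hin Hl Hu; simpl in *; [contradiction|].
  inversion ND; subst. destruct Hin as [<-|Hin].
  - rewrite Hl. simpl. f_equal.
    assert (forall v, In v s -> P v = false).
    { intros v Hv. destruct (P v) eqn:E; auto. specialize (Hu v (or_intror Hv) E). subst; contradiction. }
    clear - H. induction s; simpl; auto. rewrite H by (simpl; auto). apply IHs. intros; apply H; simpl; auto.
  - destruct (P u) eqn:E.
    + specialize (Hu u (or_introl eq_refl) E). subst. contradiction.
    + apply IH; auto.
Qed.

Lemma sumN_pos {A} (g : A -> nat) l : (0 < sumN (map g l))%nat -> exists a, In a l /\ (0 < g a)%nat.
Proof.
  induction l as [|a l IH]; simpl; unfold sumN; simpl; intros H; [lia|].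
  destruct (g a) eqn:E.
  - simpl in H. destruct (IH H) as [a' [? ?]]; eauto.
  - exists a; split; auto; lia.
Qed.

Lemma sumN_le_elem {A} (g : A -> nat) l a : In a l -> (g a <= sumN (map g l))%nat.
Proof.
  induction l as [|a' l IH]; simpl; intros H; [contradiction|]. unfold sumN in *; simpl.
  destruct H as [<-|H]; [lia|]. specialize (IH H); lia.
Qed.

Definition leaves T := (occ TA T + occ TB T + occ TC T)%nat.

Lemma leaves_Nd l r : leaves (Nd l r) = (leaves l + leaves r)%nat.
Proof. unfold leaves; simpl; lia. Qed.

Lemma leaves_pos T : (1 <= leaves T)%nat.
Proof. induction T; [destruct t; unfold leaves; simpl; lia|rewrite leaves_Nd; lia]. Qed.

Lemma leaves_1 T : leaves T = 1%nat -> exists a, T = Lf a.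
Proof.
  destruct T; eauto. rewrite leaves_Nd. pose proof (leaves_pos T1); pose proof (leaves_pos T2); lia.
Qed.

Lemma leaves_2 T : leaves T = 2%nat -> exists a b, T = Nd (Lf a) (Lf b).
Proof.
  destruct T. unfold leaves; destruct t; simpl; lia.
  rewrite leaves_Nd. pose proof (leaves_pos T1); pose proof (leaves_pos T2).
  intros Hs. destruct (leaves_1 T1 ltac:(lia)) as [a ->]. destruct (leaves_1 T2 ltac:(lia)) as [b ->]. eauto.
Qed.

Lemma occ_Lf a b : occ a (Lf b) = if taxon_eqb a b then 1%nat else 0%nat.
Proof. reflexivity. Qed.

Lemma three_leaves T1 T2 T3 : (forall a, (occl a [T1; T2; T3] <= 1)%nat) ->
  exists a1 a2 a3, T1 = Lf a1 /\ T2 = Lf a2 /\ T3 = Lf a3 /\ a1 <> a2 /\ a1 <> a3 /\ a2 <> a3.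
Proof.
  intros H. pose proof (H TA); pose proof (H TB); pose proof (H TC).
  unfold occl in *; simpl in *.
  pose proof (leaves_pos T1); pose proof (leaves_pos T2); pose proof (leaves_pos T3).
  unfold leaves in *.
  destruct (leaves_1 T1 ltac:(unfold leaves; lia)) as [a1 ->].
  destruct (leaves_1 T2 ltac:(unfold leaves; lia)) as [a2 ->].
  destruct (leaves_1 T3 ltac:(unfold leaves; lia)) as [a3 ->].
  destruct a1, a2, a3; simpl in *; try lia; eexists _, _, _; repeat split; discriminate.
Qed.

Lemma eps3_zero x y z a1 a2 a3 : x <> y -> x <> z -> y <> z -> a1 <> a2 -> a1 <> a3 -> a2 <> a3 ->
  eps x y z (Lf a1) (Lf a2) + eps x y z (Lf a1) (Lf a3) + eps x y z (Lf a2) (Lf a3) = 0.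
Proof.
  intros; destruct x, y, z; try congruence; destruct a1, a2, a3; try congruence;
  unfold eps, isp; simpl; lra.
Qed.

Lemma eps_neg x y z T1 T2 : x <> y -> x <> z -> y <> z ->
  0 <= eps x y z T1 T2 \/ (T1 = Lf x /\ T2 = Lf y) \/ (T1 = Lf y /\ T2 = Lf x).
Proof.
  intros. destruct T1 as [a|]; [|left; simpl; lra]. destruct T2 as [b|]; [|left; simpl; lra].
  destruct x, y, z; try congruence; destruct a, b; unfold eps, isp; simpl; auto; try (left; lra).
Qed.

Definition ind (g : taxon) (T : tree) : R :=
  match outgroup T with Some o => if taxon_eqb o g then 1 else 0 | None => 0 end.

Lemma final_ind x y z T : x <> y -> x <> z -> y <> z -> (forall a, occ a T = 1%nat) ->
  ind x T - ind z T = ch x y z T.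
Proof.
  intros Dxy Dxz Dyz H.
  assert (L3 : leaves T = 3%nat) by (unfold leaves; rewrite !H; auto).
  destruct T as [a|l r]; [unfold leaves in L3; destruct a; simpl in L3; lia|].
  rewrite leaves_Nd in L3. pose proof (leaves_pos l); pose proof (leaves_pos r).
  assert (leaves l = 1%nat \/ leaves l = 2%nat) as [Hl|Hl] by lia.
  - destruct (leaves_1 l Hl) as [a ->]. destruct (leaves_2 r ltac:(lia)) as [b [c ->]].
    pose proof (H TA); pose proof (H TB); pose proof (H TC). simpl in *.
    destruct x, y, z; try congruence; destruct a, b, c; simpl in *; try lia;
    unfold ind, eps, isp; simpl; lra.
  - destruct (leaves_2 l Hl) as [a [b ->]]. destruct (leaves_1 r ltac:(lia)) as [c ->].
    pose proof (H TA); pose proof (H TB); pose proof (H TC). simpl in *.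
    destruct x, y, z; try congruence; destruct a, b, c; simpl in *; try lia;
    unfold ind, eps, isp; simpl; lra.
Qed.

Lemma root_list_conds x y z L : x <> y -> x <> z -> y <> z -> (forall a, occl a L = 1%nat) ->
  (1 <= length L <= 3)%nat /\
  (forall T1 T2, L = [T1; T2] -> 0 <= eps x y z T1 T2) /\
  (forall T1 T2 T3, L = [T1; T2; T3] ->
      eps x y z T1 T2 + eps x y z T1 T3 + eps x y z T2 T3 = 0).
Proof.
  intros Dxy Dxz Dyz H.
  assert (LL : forall L, (length L <= fold_right (fun T n => (leaves T + n)%nat) 0%nat L)%nat).
  { induction L0; simpl; auto. pose proof (leaves_pos a); lia. }
  assert (Ls : fold_right (fun T n => (leaves T + n)%nat) 0%nat L = 3%nat).
  { transitivity (occl TA L + occl TB L + occl TC L)%nat; [|rewrite !H; auto].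
    clear. unfold occl, leaves. induction L; simpl; lia. }
  split; [|split].
  - pose proof (LL L). destruct L; [specialize (H TA); simpl in H; lia|]. simpl in *; lia.
  - intros T1 T2 ->. destruct (eps_neg x y z T1 T2 Dxy Dxz Dyz) as [?|[[-> ->]|[-> ->]]]; auto; exfalso;
    specialize (H z); unfold occl in H; simpl in H;
    (destruct (taxon_eqb z x) eqn:E1; [apply taxon_eqb_spec in E1; congruence|]);
    (destruct (taxon_eqb z y) eqn:E2; [apply taxon_eqb_spec in E2; congruence|]); simpl in H; lia.
  - intros T1 T2 T3 ->. destruct (three_leaves T1 T2 T3) as [a1 [a2 [a3 [-> [-> [-> [? [? ?]]]]]]]].
    + intros a; rewrite H; auto.
    + apply eps3_zero; auto.
Qed.

Definition cho x y z (f : option tree) := match f with Some T => ch x y z T | None => 0 end.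
Definition occo a (f : option tree) := match f with Some T => occ a T | None => 0%nat end.
Definition isleaf a (k : nkind) := match k with NLeaf b => taxon_eqb a b | _ => false end.
Definition nleaf psi a k := length (filter (fun u => isleaf a (kind psi u)) (seq k (nn psi - k))).

Definition psiV psi x y z k (st : state) :=
  sumR (map (fun e => chl x y z (bget (fst st) e)) (UE psi k)) + cho x y z (snd st).
Definition OC psi k a (st : state) :=
  (sumN (map (fun e => occl a (bget (fst st) e)) (UE psi k)) + nleaf psi a k + occo a (snd st))%nat.
Definition Inv psi k (st : state) :=
  (forall a, OC psi k a st = 1%nat) /\
  (forall e a, In e (UE psi k) -> (0 < occl a (bget (fst st) e))%nat ->
     (child psi e < k)%nat /\ exists q l, reach psi (child psi e) q l /\ kind psi l = NLeaf a /\ (l < nn psi)%nat) /\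
  ((k < nn psi)%nat -> snd st = None).

Lemma nleaf_cons psi a k : (k < nn psi)%nat ->
  nleaf psi a k = ((if isleaf a (kind psi k) then 1 else 0) + nleaf psi a (S k))%nat.
Proof.
  intros H. unfold nleaf. replace (nn psi - k)%nat with (S (nn psi - S k)) by lia. simpl.
  destruct (isleaf a (kind psi k)); simpl; auto.
Qed.

Lemma nleaf_nn psi a : nleaf psi a (nn psi) = 0%nat.
Proof. unfold nleaf. rewrite Nat.sub_diag. auto. Qed.

Lemma chl_app x y z L1 L2 : chl x y z (L1 ++ L2) = chl x y z L1 + chl x y z L2.
Proof. induction L1; simpl; [unfold chl; simpl; lra|]. unfold chl in *; simpl; rewrite IHL1; lra. Qed.

Lemma inc_UE psi k e : wf_network psi -> In e (inc psi k) -> In e (UE psi (S k)) /\ child psi e = k.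
Proof.
  intros W H. apply inc_spec in H. destruct H as [H Hc]. apply in_all_edges in H.
  destruct H as [u [Hu He]]. pose proof (wf_acyc psi W u Hu e He). split; auto.
  apply UE_in. exists u; split; auto; lia.
Qed.

Lemma G_add psi x y z k b e0 T : In e0 (UE psi k) ->
  sumR (map (fun e => chl x y z (bget (upd b e0 T) e)) (UE psi k)) =
  sumR (map (fun e => chl x y z (bget b e)) (UE psi k)) + ch x y z T.
Proof.
  intros H. rewrite (sumR_upd (chl x y z) (ch x y z)) by (auto; apply UE_nodup).
  destruct (in_dec edge_eq_dec e0 (UE psi k)); [auto|contradiction].
Qed.

Lemma GN_add psi a k b e0 T : In e0 (UE psi k) ->
  sumN (map (fun e => occl a (bget (upd b e0 T) e)) (UE psi k)) =
  (sumN (map (fun e => occl a (bget b e)) (UE psi k)) + occ a T)%nat.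
Proof.
  intros H. rewrite (sumN_upd (occl a) (occ a)) by (auto; apply UE_nodup).
  destruct (in_dec edge_eq_dec e0 (UE psi k)); [auto|contradiction].
Qed.

Lemma sumR_chl_map x y z L : sumR (map (ch x y z) L) = chl x y z L.
Proof. induction L; simpl; auto. unfold sumR, chl in *; simpl. now rewrite IHL. Qed.
Lemma sumN_occ_map a L : sumN (map (occ a) L) = occl a L.
Proof. induction L; simpl; auto. Qed.

Lemma taxon_eqb_refl a : taxon_eqb a a = true.
Proof. destruct a; auto. Qed.
Lemma taxon_eqb_neq a b : a <> b -> taxon_eqb a b = false.
Proof. intros D. destruct (taxon_eqb a b) eqn:E; auto. apply taxon_eqb_spec in E; congruence. Qed.

Lemma out_in_UE psi k e : (k < nn psi)%nat -> In e (out_edges psi k) -> In e (UE psi k).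
Proof. intros H He. apply UE_in. exists k; split; auto; lia. Qed.

Lemma filter_pos {A} (P : A -> bool) l : (0 < length (filter P l))%nat -> exists a, In a l /\ P a = true.
Proof.
  induction l; simpl; intros H; [lia|]. destruct (P a) eqn:E; eauto.
  destruct (IHl H) as [b [? ?]]; eauto.
Qed.

Lemma isleaf_true a kd : isleaf a kd = true -> kd = NLeaf a.
Proof. destruct kd; simpl; try discriminate. intros H; apply taxon_eqb_spec in H; subst; auto. Qed.

Lemma edge_conds psi x y z k b f e :
  wf_network psi -> x <> y -> x <> z -> y <> z -> ~ parental psi z ->
  (k < nn psi)%nat -> Inv psi k (b, f) -> In e (out_edges psi k) ->
  (forall a, kind psi k <> NLeaf a) ->
  (forall T1 T2, bget b e = [T1; T2] -> 0 <= eps x y z T1 T2) /\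
  (forall T1 T2 T3, bget b e = [T1; T2; T3] ->
      eps x y z T1 T2 + eps x y z T1 T3 + eps x y z T2 T3 = 0).
Proof.
  intros W Dxy Dxz Dyz NP Hk [I1 [I2 I3]] He NL.
  assert (HeU : In e (UE psi k)) by (apply out_in_UE; auto).
  assert (Le1 : forall a, (occl a (bget b e) <= 1)%nat).
  { intros a. pose proof (I1 a). unfold OC in H; simpl in H.
    pose proof (sumN_le_elem (fun e0 => occl a (bget b e0)) (UE psi k) e HeU). simpl in H0. lia. }
  split.
  - intros T1 T2 E2.
    assert (Gen : forall u v, (u = x /\ v = y) \/ (u = y /\ v = x) -> bget b e = [Lf u; Lf v] -> False).
    { intros u v Huv Eb.
      assert (Ox : (0 < occl x (bget b e))%nat).
      { rewrite Eb. unfold occl; simpl. destruct Huv as [[-> ->]|[-> ->]]; rewrite taxon_eqb_refl; simpl; lia. }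
      assert (Oy : (0 < occl y (bget b e))%nat).
      { rewrite Eb. unfold occl; simpl. destruct Huv as [[-> ->]|[-> ->]]; rewrite taxon_eqb_refl; simpl; lia. }
      assert (Oz : occl z (bget b e) = 0%nat).
      { rewrite Eb. unfold occl; simpl. destruct Huv as [[-> ->]|[-> ->]];
        rewrite !taxon_eqb_neq by congruence; auto. }
      destruct (I2 e x HeU Ox) as [_ [qx [lx [Rx [Kx Lx]]]]].
      destruct (I2 e y HeU Oy) as [_ [qy [ly [Ry [Ky Ly]]]]].
      apply NP. apply (struct_parental psi x y z k e qx qy lx ly); auto.
      pose proof (I1 z) as Hz. unfold OC in Hz; simpl in Hz. pose proof (I3 Hk) as If; simpl in If; subst f. simpl in Hz.
      destruct (sumN (map (fun e0 => occl z (bget b e0)) (UE psi k))) eqn:S.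
      + right. destruct (filter_pos (fun u => isleaf z (kind psi u)) (seq k (nn psi - k))) as [lz [Hin Hl]].
        { unfold nleaf in Hz. lia. }
        apply in_seq in Hin. apply isleaf_true in Hl. exists lz. split; auto.
        assert (lz <> k) by (intros ->; apply (NL z); auto). lia.
      + left. destruct (sumN_pos (fun e0 => occl z (bget b e0)) (UE psi k)) as [e2 [He2 Oz2]]; [rewrite S; lia|].
        destruct (I2 e2 z He2 Oz2) as [Hc2 [q2 [lz [Rz [Kz Lz]]]]].
        apply UE_in in He2. destruct He2 as [u2 [Hu2 Ho2]].
        exists u2, e2, q2, lz. repeat split; auto; try lia.
        intros ->. lia. }
    destruct (eps_neg x y z T1 T2 Dxy Dxz Dyz) as [?|[[-> ->]|[-> ->]]]; auto; exfalso.
    + exact (Gen x y (or_introl (conj eq_refl eq_refl)) E2).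
    + exact (Gen y x (or_intror (conj eq_refl eq_refl)) E2).
  - intros T1 T2 T3 E3.
    destruct (three_leaves T1 T2 T3) as [a1 [a2 [a3 [-> [-> [-> [? [? ?]]]]]]]].
    + intros a; rewrite <- E3; auto.
    + apply eps3_zero; auto.
Qed.

Lemma E_plus_const {X} (d : Defs.dist X) C g : E d (fun x => C + g x) = C * E d (fun _ => 1) + E d g.
Proof.
  rewrite (E_plus d (fun _ => C) g). f_equal. apply E_const. auto.
Qed.

Lemma UE_sub psi k e : In e (UE psi (S k)) -> In e (UE psi k).
Proof. rewrite !UE_in. intros [u [H1 H2]]. exists u; split; auto; lia. Qed.

Lemma nonroot_generic psi x y z k b f (Ld : Defs.dist (list tree)) (ws : list (edge * R))
  (Cpsi : R) (Cocc : taxon -> nat) :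
  wf_network psi -> (k < nn psi)%nat -> Inv psi k (b, f) ->
  (forall px, In px Ld -> 0 <= fst px /\ (forall a, occl a (snd px) = Cocc a) /\
     (forall a, (0 < occl a (snd px))%nat ->
        exists q l, reach psi k q l /\ kind psi l = NLeaf a /\ (l < nn psi)%nat)) ->
  E Ld (fun _ => 1) = 1 -> Cpsi <= E Ld (chl x y z) ->
  (forall ew, In ew ws -> 0 <= snd ew) -> sumR (map snd ws) = 1 ->
  (forall ew, In ew ws -> In (fst ew) (inc psi k)) ->
  psiV psi x y z k (b, f) = Cpsi + psiV psi x y z (S k) (b, f) ->
  (forall a, OC psi k a (b, f) = (Cocc a + OC psi (S k) a (b, f))%nat) ->
  (forall px, In px (dbind Ld (fun L => map (fun pb => (fst pb, (snd pb, f))) (distribute ws L b))) ->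
     0 <= fst px /\ Inv psi (S k) (snd px)) /\
  psiV psi x y z k (b, f) <=
    E (dbind Ld (fun L => map (fun pb => (fst pb, (snd pb, f))) (distribute ws L b))) (psiV psi x y z (S k)).
Proof.
  intros W Hk [I1 [I2 I3]] HLd Hm HC Hw Hs Hinc Hpsi HOC.
  assert (WsU : forall ew, In ew ws -> In (fst ew) (UE psi (S k)) /\ child psi (fst ew) = k)
    by (intros ew H; apply inc_UE; auto).
  pose proof (dist_mass ws Hw Hs) as DM.
  split.
  - intros px Hp. apply in_dbind in Hp. destruct Hp as [pL [qy [HL [Hq ->]]]].
    apply in_map_iff in Hq. destruct Hq as [pb [<- Hpb]]. simpl.
    destruct (HLd pL HL) as [HpL [Hocc Hpos]].
    split; [apply Rmult_le_pos; auto; apply (proj2 (DM (snd pL) b)); auto|].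
    split; [|split].
    + intros a. unfold OC; simpl.
      rewrite (dist_pt_N (fun b0 => sumN (map (fun e => occl a (bget b0 e)) (UE psi (S k)))) (occ a) ws)
        with (L := snd pL) (b := b); auto.
      * rewrite sumN_occ_map, Hocc. pose proof (I1 a) as H1. rewrite HOC in H1. unfold OC in H1; simpl in H1. lia.
      * intros b' ew T Hew. apply GN_add. apply WsU; auto.
    + intros e a He Ho. simpl in Ho.
      destruct (dist_I2 ws (snd pL) b pb Hpb e a Ho) as [Ho'|[Ho' Hin]].
      * destruct (I2 e a (UE_sub psi k e He) Ho') as [Hc Hp]. split; auto.
      * apply in_map_iff in Hin. destruct Hin as [ew [<- Hew]]. destruct (WsU ew Hew) as [_ Hc].
        rewrite Hc. split; auto.
    + intros Hk'. simpl. apply I3. lia.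
  - rewrite E_dbind. rewrite Hpsi.
    transitivity (E Ld (fun L => (sumR (map (fun e => chl x y z (bget b e)) (UE psi (S k))) + cho x y z f) + chl x y z L)).
    + rewrite E_plus_const, Hm. unfold psiV; simpl. lra.
    + apply Req_le. apply E_ext. intros pL HL. rewrite (E_map (fun b0 => (b0, f))).
      rewrite (E_const _ _ (sumR (map (fun e => chl x y z (bget b e)) (UE psi (S k))) + cho x y z f + chl x y z (snd pL))).
      * rewrite (proj1 (DM (snd pL) b)). lra.
      * intros pb Hpb. unfold psiV; simpl.
        rewrite (dist_pt_R (fun b0 => sumR (map (fun e => chl x y z (bget b0 e)) (UE psi (S k)))) (ch x y z) ws)
          with (L := snd pL) (b := b); auto.
        -- rewrite sumR_chl_map. lra.
        -- intros b' ew T Hew. apply G_add. apply WsU; auto.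
Qed.

Definition coal_conds x y z L :=
  (forall T1 T2, L = [T1; T2] -> 0 <= eps x y z T1 T2) /\
  (forall T1 T2 T3, L = [T1; T2; T3] -> eps x y z T1 T2 + eps x y z T1 T3 + eps x y z T2 T3 = 0).

Lemma Ld_one x y z t L0 : 0 <= t -> coal_conds x y z L0 ->
  (forall px, In px (coal t L0) -> 0 <= fst px /\ forall a, occl a (snd px) = occl a L0) /\
  E (coal t L0) (fun _ => 1) = 1 /\ chl x y z L0 <= E (coal t L0) (chl x y z).
Proof.
  intros Ht [C2 C3]. split; [|split].
  - intros px Hp. split; [eapply (coal_weights t L0); eauto|]. apply (coal_occ t); auto.
  - apply coal_mass.
  - apply coal_ch; auto.
Qed.

Lemma Ld_two x y z t1 t2 L0f L0t : 0 <= t1 -> 0 <= t2 -> coal_conds x y z L0f -> coal_conds x y z L0t ->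
  let Ld := dbind (coal t1 L0f) (fun L1 => dbind (coal t2 L0t) (fun L2 => dret (L1 ++ L2))) in
  (forall px, In px Ld -> 0 <= fst px /\ forall a, occl a (snd px) = (occl a L0f + occl a L0t)%nat) /\
  E Ld (fun _ => 1) = 1 /\ chl x y z L0f + chl x y z L0t <= E Ld (chl x y z).
Proof.
  intros H1 H2 C1 C2 Ld.
  destruct (Ld_one x y z t1 L0f H1 C1) as [A1 [B1 D1]].
  destruct (Ld_one x y z t2 L0t H2 C2) as [A2 [B2 D2]].
  split; [|split].
  - intros px Hp. unfold Ld in Hp. apply in_dbind in Hp. destruct Hp as [p1 [q [Hp1 [Hq ->]]]].
    apply in_dbind in Hq. destruct Hq as [p2 [r [Hp2 [Hr ->]]]].
    destruct Hr as [<-|[]]. simpl.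
    destruct (A1 p1 Hp1) as [W1 O1]. destruct (A2 p2 Hp2) as [W2 O2].
    split; [repeat apply Rmult_le_pos; lra|]. intros a. rewrite occl_app, O1, O2. auto.
  - unfold Ld. rewrite E_dbind. transitivity (E (coal t1 L0f) (fun _ => 1)); [|exact B1].
    apply E_ext. intros p1 _.
    rewrite E_dbind. transitivity (E (coal t2 L0t) (fun _ => 1)); [|exact B2].
    apply E_ext. intros; rewrite E_dret; auto.
  - unfold Ld. rewrite E_dbind.
    transitivity (E (coal t1 L0f) (fun L1 => chl x y z L1 + chl x y z L0t)).
    + rewrite E_plus, (E_const _ (fun _ => chl x y z L0t) (chl x y z L0t)), B1 by auto. lra.
    + apply E_le. intros p1 Hp1. split; [apply (A1 p1 Hp1)|].
      rewrite E_dbind.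
      transitivity (E (coal t2 L0t) (fun L2 => chl x y z (snd p1) + chl x y z L2)).
      * rewrite E_plus_const, B2. lra.
      * apply Req_le, E_ext. intros; rewrite E_dret, chl_app; auto.
Qed.

Lemma pos_from_out psi k b f a : wf_network psi -> (k < nn psi)%nat -> Inv psi k (b, f) ->
  (0 < sumN (map (fun e => occl a (bget b e)) (out_edges psi k)))%nat ->
  exists q l, reach psi k q l /\ kind psi l = NLeaf a /\ (l < nn psi)%nat.
Proof.
  intros W Hk [_ [I2 _]] H. apply sumN_pos in H. destruct H as [e [He Ho]].
  destruct (I2 e a (out_in_UE psi k e Hk He) Ho) as [_ [q [l [R [K L]]]]].
  exists (epos psi e ++ q), l. split; auto. eapply reach_app; eauto. apply edge_reach; auto.
Qed.

Lemma len_pos psi lam k e : valid_lengths psi lam -> (k < nn psi)%nat -> In e (out_edges psi k) ->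
  0 <= lam (fst e) (snd e).
Proof. intros V Hk He. left. apply V. apply in_all_edges. eauto. Qed.

Lemma inc_one psi k : wf_network psi -> (k < nn psi)%nat -> indeg_req (kind psi k) = 1%nat ->
  exists e0, inc psi k = [e0].
Proof.
  intros [_ [D _]] Hk H. specialize (D k Hk). rewrite H in D.
  destruct (inc psi k) as [|e0 [|e1 l]]; simpl in D; try lia. eauto.
Qed.

Lemma ws1_facts psi k : wf_network psi -> (k < nn psi)%nat -> indeg_req (kind psi k) = 1%nat ->
  let ws := map (fun e : edge => (e, 1)) (inc psi k) in
  (forall ew, In ew ws -> 0 <= snd ew) /\ sumR (map snd ws) = 1 /\
  (forall ew, In ew ws -> In (fst ew) (inc psi k)).
Proof.
  intros W Hk H ws. destruct (inc_one psi k W Hk H) as [e0 E0]. unfold ws. rewrite E0.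
  split; [|split].
  - intros ew [<-|[]]; simpl; lra.
  - unfold sumR; simpl; lra.
  - intros ew [<-|[]]; simpl; auto.
Qed.

Lemma step_nonroot psi lam gam x y z k b f :
  wf_network psi -> valid_lengths psi lam -> valid_gammas psi gam ->
  x <> y -> x <> z -> y <> z -> ~ parental psi z ->
  (k < nn psi)%nat -> Inv psi k (b, f) -> is_root (kind psi k) = false ->
  (forall px, In px (step psi lam gam k (b, f)) -> 0 <= fst px /\ Inv psi (S k) (snd px)) /\
  psiV psi x y z k (b, f) <= E (step psi lam gam k (b, f)) (psiV psi x y z (S k)).
Proof.
  intros W VL VG Dxy Dxz Dyz NP Hk Inv0 Hr.
  unfold step. cbn [fst snd].
  assert (NLf : forall c1 c2, kind psi k = NTree c1 c2 -> forall a, kind psi k <> NLeaf a)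
    by (intros c1 c2 H a; rewrite H; discriminate).
  destruct (kind psi k) eqn:Hk'; simpl in Hr; try discriminate; simpl is_root; simpl is_ret; cbv beta iota.
  -
    assert (O : out_edges psi k = [(k,false);(k,true)]) by (unfold out_edges; rewrite Hk'; auto).
    assert (NL : forall a, kind psi k <> NLeaf a) by (intros a; rewrite Hk'; discriminate).
    assert (C1 := edge_conds psi x y z k b f (k,false) W Dxy Dxz Dyz NP Hk Inv0 ltac:(rewrite O; simpl; auto) NL).
    assert (C2 := edge_conds psi x y z k b f (k,true) W Dxy Dxz Dyz NP Hk Inv0 ltac:(rewrite O; simpl; auto) NL).
    assert (L1 := len_pos psi lam k (k,false) VL Hk ltac:(rewrite O; simpl; auto)).
    assert (L2 := len_pos psi lam k (k,true) VL Hk ltac:(rewrite O; simpl; auto)).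
    simpl in L1, L2. unfold bget in C1, C2; simpl in C1, C2.
    destruct (Ld_two x y z _ _ _ _ L1 L2 C1 C2) as [A [B D]].
    destruct (ws1_facts psi k W Hk ltac:(rewrite Hk'; auto)) as [w1 [w2 w3]].
    apply (nonroot_generic psi x y z k b f _ _ (chl x y z (b k false) + chl x y z (b k true))
             (fun a => (occl a (b k false) + occl a (b k true))%nat)); auto.
    + intros px Hp. destruct (A px Hp) as [A1 A2]. split; auto. split; auto.
      intros a Ha. apply (pos_from_out psi k b f a W Hk Inv0). rewrite O. unfold bget; simpl.
      rewrite A2 in Ha. lia.
    + unfold psiV; cbn [fst snd]. rewrite UE_cons by auto. rewrite map_app, sumR_app, O.
      unfold sumR at 1, bget; simpl. lra.
    + intros a. unfold OC; cbn [fst snd]. rewrite UE_cons by auto. rewrite map_app, sumN_app, O.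
      rewrite nleaf_cons by auto. rewrite Hk'. unfold sumN at 1, bget; simpl. lia.
  -
    assert (O : out_edges psi k = []) by (unfold out_edges; rewrite Hk'; auto).
    destruct (ws1_facts psi k W Hk ltac:(rewrite Hk'; auto)) as [w1 [w2 w3]].
    apply (nonroot_generic psi x y z k b f _ _ 0 (fun a => occl a [Lf t])); auto.
    + intros px [<-|[]]. simpl. split; [lra|]. split; auto.
      intros a Ha. unfold occl in Ha; simpl in Ha. destruct (taxon_eqb a t) eqn:E; simpl in Ha; [|lia].
      apply taxon_eqb_spec in E; subst. exists [], k. split; [apply r_nil|auto].
    + unfold E, dret; simpl; lra.
    + unfold E, dret; simpl. unfold chl; simpl; lra.
    + unfold psiV; cbn [fst snd]. rewrite UE_cons by auto. rewrite O. simpl. lra.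
    + intros a. unfold OC; cbn [fst snd]. rewrite UE_cons by auto. rewrite O.
      rewrite nleaf_cons by auto. rewrite Hk'. unfold occl; simpl. destruct (taxon_eqb a t); simpl; lia.
  -
    assert (O : out_edges psi k = [(k,false)]) by (unfold out_edges; rewrite Hk'; auto).
    assert (NL : forall a, kind psi k <> NLeaf a) by (intros a; rewrite Hk'; discriminate).
    assert (C1 := edge_conds psi x y z k b f (k,false) W Dxy Dxz Dyz NP Hk Inv0 ltac:(rewrite O; simpl; auto) NL).
    assert (L1 := len_pos psi lam k (k,false) VL Hk ltac:(rewrite O; simpl; auto)).
    simpl in L1. unfold bget in C1; simpl in C1.
    destruct (Ld_one x y z _ _ L1 C1) as [A [B D]].
    destruct (VG k Hk ltac:(rewrite Hk'; auto)) as [G1 G2].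
    apply (nonroot_generic psi x y z k b f _ _ (chl x y z (b k false))
             (fun a => occl a (b k false))); auto.
    + intros px Hp. destruct (A px Hp) as [A1 A2]. split; auto. split; auto.
      intros a Ha. apply (pos_from_out psi k b f a W Hk Inv0). rewrite O. unfold bget; simpl.
      rewrite A2 in Ha. unfold sumN; simpl. lia.
    + intros ew Hew. apply in_map_iff in Hew. destruct Hew as [e [<- He]]. simpl. auto.
    + rewrite map_map. simpl. exact G2.
    + intros ew Hew. apply in_map_iff in Hew. destruct Hew as [e [<- He]]. simpl. auto.
    + unfold psiV; cbn [fst snd]. rewrite UE_cons by auto. rewrite map_app, sumR_app, O.
      unfold sumR at 1, bget; simpl. lra.
    + intros a. unfold OC; cbn [fst snd]. rewrite UE_cons by auto. rewrite map_app, sumN_app, O.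
      rewrite nleaf_cons by auto. rewrite Hk'. unfold sumN at 1, bget; simpl. lia.
Qed.

Lemma step_root psi lam gam x y z k b f :
  wf_network psi -> valid_lengths psi lam ->
  x <> y -> x <> z -> y <> z -> ~ parental psi z ->
  (k < nn psi)%nat -> Inv psi k (b, f) -> is_root (kind psi k) = true ->
  (forall px, In px (step psi lam gam k (b, f)) -> 0 <= fst px /\ Inv psi (S k) (snd px)) /\
  psiV psi x y z k (b, f) <= E (step psi lam gam k (b, f)) (psiV psi x y z (S k)).
Proof.
  intros W VL Dxy Dxz Dyz NP Hk Inv0 Hr.
  assert (Klast : S k = nn psi).
  { pose proof W as W'. destruct W' as [_ [_ [[r [Hr' [Hroot Uniq]]] _]]].
    pose proof (Uniq k Hk Hr). subst r. pose proof (root_last psi k W Hr' Hroot Uniq). lia. }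
  pose proof Inv0 as [I1 [I2 I3]]. pose proof (I3 Hk) as If. simpl in If. subst f.
  unfold step. cbn [fst snd].
  destruct (kind psi k) eqn:Hk'; simpl in Hr; try discriminate; simpl is_root; cbv beta iota.
  assert (O : out_edges psi k = [(k,false);(k,true)]) by (unfold out_edges; rewrite Hk'; auto).
  assert (NL : forall a, kind psi k <> NLeaf a) by (intros a; rewrite Hk'; discriminate).
  assert (C1 := edge_conds psi x y z k b None (k,false) W Dxy Dxz Dyz NP Hk Inv0 ltac:(rewrite O; simpl; auto) NL).
  assert (C2 := edge_conds psi x y z k b None (k,true) W Dxy Dxz Dyz NP Hk Inv0 ltac:(rewrite O; simpl; auto) NL).
  assert (L1 := len_pos psi lam k (k,false) VL Hk ltac:(rewrite O; simpl; auto)).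
  assert (L2 := len_pos psi lam k (k,true) VL Hk ltac:(rewrite O; simpl; auto)).
  simpl in L1, L2. unfold bget in C1, C2; simpl in C1, C2.
  destruct (Ld_two x y z _ _ _ _ L1 L2 C1 C2) as [A [B D]].
  assert (UEn : UE psi (S k) = []) by (rewrite Klast; apply UE_nn).
  assert (Occ1 : forall a, (occl a (b k false) + occl a (b k true))%nat = 1%nat).
  { intros a. pose proof (I1 a) as H. unfold OC in H; cbn [fst snd] in H.
    rewrite UE_cons, map_app, sumN_app, O, UEn, nleaf_cons, Hk' in H by auto.
    rewrite Klast, nleaf_nn in H. unfold sumN, bget in H; simpl in H. lia. }
  assert (RL : forall px, In px (dbind (coal (lam k false) (b k false))
           (fun L1 => dbind (coal (lam k true) (b k true)) (fun L2 => dret (L1 ++ L2)))) ->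
           forall a, occl a (snd px) = 1%nat).
  { intros px Hp a. destruct (A px Hp) as [_ A2]. rewrite A2. apply Occ1. }
  split.
  - intros px Hp. apply in_dbind in Hp. destruct Hp as [pL [qy [HL [Hq ->]]]].
    apply in_map_iff in Hq. destruct Hq as [pt [<- Hpt]]. simpl.
    split; [apply Rmult_le_pos; [apply (A pL HL)|eapply coal_inf_weights; eauto]|].
    split; [|split].
    + intros a. unfold OC; cbn [fst snd]. rewrite UEn, Klast, nleaf_nn. simpl.
      rewrite (coal_inf_occ _ _ Hpt). apply RL; auto.
    + intros e a He. rewrite UEn in He. destruct He.
    + intros H. lia.
  - rewrite E_dbind.
    unfold psiV; cbn [fst snd]. rewrite UE_cons, map_app, sumR_app, O, UEn by auto.
    unfold sumR at 1 2, bget; simpl.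
    apply Rle_trans with (E (dbind (coal (lam k false) (b k false))
           (fun L1 => dbind (coal (lam k true) (b k true)) (fun L2 => dret (L1 ++ L2)))) (chl x y z)).
    + lra.
    + apply E_le. intros pL HL. split; [apply (A pL HL)|].
      cbv beta. rewrite (@E_map tree state (fun T => (b, Some T))). simpl.
      destruct (root_list_conds x y z (snd pL) Dxy Dxz Dyz (RL pL HL)) as [R1 [R2 R3]].
      replace (fun x0 : tree => 0 + ch x y z x0) with (ch x y z) by (apply functional_extensionality; intros; lra).
      apply coal_inf_ch; auto.
Qed.

Lemma step_ok psi lam gam x y z k st :
  wf_network psi -> valid_lengths psi lam -> valid_gammas psi gam ->
  x <> y -> x <> z -> y <> z -> ~ parental psi z ->
  (k < nn psi)%nat -> Inv psi k st ->
  (forall px, In px (step psi lam gam k st) -> 0 <= fst px /\ Inv psi (S k) (snd px)) /\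
  psiV psi x y z k st <= E (step psi lam gam k st) (psiV psi x y z (S k)).
Proof.
  intros. destruct st as [b f]. destruct (is_root (kind psi k)) eqn:R.
  - eapply step_root; eauto.
  - eapply step_nonroot; eauto.
Qed.

Definition Dk psi lam gam k := fold_left (fun d c => dbind d (step psi lam gam c)) (seq 0 k)
  (dret ((fun _ _ => []), None) : Defs.dist state).

Lemma Inv_init psi : wf_network psi -> Inv psi 0 ((fun _ _ => []), None).
Proof.
  intros W. split; [|split].
  - intros a. unfold OC; cbn [fst snd].
    assert (S0 : sumN (map (fun e => occl a (bget (fun _ _ => []) e)) (UE psi 0)) = 0%nat).
    { generalize (UE psi 0). induction l; simpl; auto. }
    rewrite S0. simpl. rewrite Nat.add_0_r.
    destruct W as [_ [_ [_ Lv]]]. destruct (Lv a) as [l [Hl [Hk U]]].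
    unfold nleaf. rewrite Nat.sub_0_r. apply filter_one with l.
    + apply seq_NoDup.
    + apply in_seq; lia.
    + rewrite Hk. simpl. apply taxon_eqb_refl.
    + intros u Hu Hl'. apply in_seq in Hu. apply isleaf_true in Hl'. apply U; auto; lia.
  - intros e a _ H. simpl in H. unfold bget in H; simpl in H. unfold occl in H; simpl in H. lia.
  - auto.
Qed.

Lemma run_inv psi lam gam x y z :
  wf_network psi -> valid_lengths psi lam -> valid_gammas psi gam ->
  x <> y -> x <> z -> y <> z -> ~ parental psi z ->
  forall k, (k <= nn psi)%nat ->
  (forall px, In px (Dk psi lam gam k) -> 0 <= fst px /\ Inv psi k (snd px)) /\
  0 <= E (Dk psi lam gam k) (psiV psi x y z k).
Proof.
  intros W VL VG Dxy Dxz Dyz NP. induction k; intros Hk.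
  - unfold Dk; simpl. split.
    + intros px [<-|[]]. simpl. split; [lra|]. apply Inv_init; auto.
    + rewrite E_dret. unfold psiV; cbn [fst snd cho].
      assert (S0 : sumR (map (fun e => chl x y z (bget (fun _ _ => []) e)) (UE psi 0)) = 0).
      { generalize (UE psi 0). induction l; [reflexivity|]. unfold sumR in *. cbn [map fold_right].
        rewrite IHl. unfold bget, chl; simpl; lra. }
      rewrite S0; lra.
  - destruct (IHk ltac:(lia)) as [IH1 IH2].
    assert (ED : Dk psi lam gam (S k) = dbind (Dk psi lam gam k) (step psi lam gam k)).
    { unfold Dk. rewrite seq_S, fold_left_app. reflexivity. }
    rewrite ED. split.
    + intros px Hp. apply in_dbind in Hp. destruct Hp as [p0 [q [H1 [H2 ->]]]].
      destruct (IH1 p0 H1) as [W0 I0].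
      destruct (step_ok psi lam gam x y z k (snd p0) W VL VG Dxy Dxz Dyz NP ltac:(lia) I0) as [S1 _].
      destruct (S1 q H2). simpl. split; auto. apply Rmult_le_pos; auto.
    + rewrite E_dbind. apply Rle_trans with (E (Dk psi lam gam k) (psiV psi x y z k)); auto.
      apply E_le. intros p0 H1. destruct (IH1 p0 H1) as [W0 I0]. split; auto.
      apply (step_ok psi lam gam x y z k (snd p0) W VL VG Dxy Dxz Dyz NP ltac:(lia) I0).
Qed.

Definition indst (g : taxon) (st : state) : R :=
  match snd st with Some T => ind g T | None => 0 end.

Lemma gtp_E psi lam gam g : gene_tree_prob psi lam gam g = E (msnc_run psi lam gam) (indst g).
Proof.
  unfold gene_tree_prob, E. f_equal. apply map_ext. intros [p [b f]]. unfold indst, ind; simpl.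
  destruct f as [t|]; [|lra]. destruct (outgroup t); [|lra]. destruct (taxon_eqb t0 g); lra.
Qed.

Lemma main_ineq psi lam gam x y z :
  wf_network psi -> valid_lengths psi lam -> valid_gammas psi gam ->
  x <> y -> x <> z -> y <> z -> ~ parental psi z ->
  gene_tree_prob psi lam gam z <= gene_tree_prob psi lam gam x.
Proof.
  intros W VL VG Dxy Dxz Dyz NP.
  destruct (run_inv psi lam gam x y z W VL VG Dxy Dxz Dyz NP (nn psi) (le_n _)) as [I1 I2].
  rewrite !gtp_E. unfold msnc_run. fold (Dk psi lam gam (nn psi)).
  assert (HE : E (Dk psi lam gam (nn psi)) (fun st => indst x st - indst z st) =
          E (Dk psi lam gam (nn psi)) (psiV psi x y z (nn psi))).
  { apply E_ext. intros [p [b f]] Hp. destruct (I1 _ Hp) as [_ [J1 _]]. simpl.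
    unfold psiV, indst; simpl. rewrite UE_nn. simpl.
    assert (Hf : forall a, occo a f = 1%nat).
    { intros a. specialize (J1 a). unfold OC in J1; simpl in J1. rewrite UE_nn, nleaf_nn in J1. simpl in J1. auto. }
    destruct f as [T|]; [|specialize (Hf TA); simpl in Hf; lia].
    simpl in Hf. simpl. unfold sumR; simpl. rewrite (final_ind x y z T); auto. lra. }
  rewrite E_minus in HE. lra.
Qed.

Lemma third_taxon (t g : taxon) : t <> g -> exists y, t <> y /\ y <> g.
Proof.
  intros D. destruct t, g; try congruence;
  [exists TC|exists TB|exists TC|exists TA|exists TB|exists TA]; split; discriminate.
Qed.

Theorem lemma1 :
  forall psi : network, wf_network psi ->
  forall lam gam : nat -> bool -> R,
    valid_lengths psi lam -> valid_gammas psi gam ->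
    forall g : taxon, ~ anomalous psi lam gam g.
Proof.
  intros psi W lam gam VL VG g Ha.
  destruct (parental_exists psi W) as [t Pt].
  destruct (classic (parental psi g)) as [Pg|NPg].
  - specialize (Ha g Pg). lra.
  - assert (D : t <> g) by (intros ->; contradiction).
    destruct (third_taxon t g D) as [y [D1 D2]].
    pose proof (main_ineq psi lam gam t y g W VL VG D1 D D2 NPg).
    specialize (Ha t Pt). lra.
Qed.
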